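(* Let the data $\eta,Q_g,\Psi,c_{max},\theta_s$ be as in the context, and let the pyrolysis heat satisfy $Q_p>0$. Let $c_{min}\in(c_{max},0)$ be the unique value with $\theta_s(c_{min})=\frac{Q_p}{Q_g+Q_p}$. Then there exists exactly one $c\in[c_{max},0]$ for which the interface problem (P$_c$) described in the context admits a solution $\theta$, and this $c$ belongs to the interval $(c_{max},c_{min})$.
   Context: Dimensionless travelling-wave formulation of a solid-propellant combustion model ($x<0$ inert solid, $x>0$ gas, interface at $x=0$; $\theta$ dimensionless temperature; $c<0$ dimensionless regression velocity). Data: $\eta>0$; gas reaction heat $Q_g>0$; pyrolysis heat $Q_p\in\mathbb R$; $\Psi:[0,1]\to[0,\infty)$ of class $C^\infty$ with $\Psi(\theta)>0$ for $\theta\in[0,1)$ and $\Psi(1)=0$; a number $c_{max}<0$ and a surface-temperature map $\theta_s:[c_{max},0]\to[0,1]$ (inverse of a pyrolysis law with cut-off at the initial temperature) that is continuous and strictly decreasing with $\theta_s(0)=0$, $\theta_s(c_{max})=1$, and $C^\infty$ on $[c_{max},0)$ with $\theta_s'(c)<0$ there. Define $S(c):=\eta\,\frac{Q_p}{Q_p+Q_g}\,c$. For $c\in[c_{max},0]$, problem (P$_c$) asks for $\theta:\mathbb R\to[0,1]$, continuous, of class $C^2$ on $(-\infty,0]$ and on $[0,\infty)$ (one-sided derivatives at $0$), such that $\theta''+c\theta'=0$ for $x<0$; $\theta''+\eta c\theta'=-\Psi(\theta)$ for $x>0$; $\theta(x)\to0$ as $x\to-\infty$, $\theta(0)=\theta_s(c)$,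 $\theta(x)\to1$ as $x\to+\infty$, $\theta'(x)\to0$ as $x\to\pm\infty$; and the interface heat balance $\theta'(0^+)-\eta\,\theta'(0^-)=S(c)$. *)

(* Defs.v *)
From Stdlib Require Import Reals Lra.
From Coquelicot Require Import Coquelicot.
Open Scope R_scope.

Definition smooth_on_open (U : R -> Prop) (f : R -> R) : Prop :=
  forall (n : nat) (x : R), U x -> ex_derive_n f n x.

Definition C2 (f : R -> R) : Prop :=
  (forall x, ex_derive f x) /\
  (forall x, ex_derive (Derive f) x) /\
  (forall x, continuous (Derive (Derive f)) x).

Definition S (eta Qg Qp c : R) : R := eta * (Qp / (Qp + Qg)) * c.

(* The C^2 regularity of theta on (-oo,0] and on
   [0,+oo) (one-sided derivatives at 0) is expressed by C^2 functions
   thl, thr on R agreeing with theta on (-oo,0], resp. [0,+oo); the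
   one-sided derivatives of theta are then those of thl, thr. *)
Definition Pc (eta Qg Qp : R) (Psi thetas : R -> R) (c : R) (theta : R -> R)
  : Prop :=
  (forall x, 0 <= theta x <= 1) /\
  (forall x, continuous theta x) /\
  exists thl thr : R -> R,
    C2 thl /\ C2 thr /\
    (forall x, x <= 0 -> thl x = theta x) /\
    (forall x, 0 <= x -> thr x = theta x) /\
    (forall x, x < 0 -> Derive (Derive thl) x + c * Derive thl x = 0) /\
    (forall x, 0 < x ->
       Derive (Derive thr) x + eta * c * Derive thr x = - Psi (theta x)) /\
    is_lim theta m_infty 0 /\
    theta 0 = thetas c /\
    is_lim theta p_infty 1 /\
    is_lim (Derive thl) m_infty 0 /\
    is_lim (Derive thr) p_infty 0 /\
    Derive thr 0 - eta * Derive thl 0 = S eta Qg Qp c.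

(* Main.v *)
Require Import Defs.
From Stdlib Require Import Reals.
From Coquelicot Require Import Coquelicot.
From Stdlib Require Import Lra ClassicalEpsilon Classical Ranalysis5.
Open Scope R_scope.

Lemma deriv_contpt f x l : is_derive f x l -> continuity_pt f x.
Proof.
  intro H. apply continuity_pt_filterlim.
  apply (ex_derive_continuous f x). exists l; exact H.
Qed.

Lemma MVT_open f df a b : a < b ->
  (forall x, a < x < b -> is_derive f x (df x)) ->
  (forall x, a <= x <= b -> continuity_pt f x) ->
  exists c, a < c < b /\ f b - f a = df c * (b - a).
Proof.
  intros Hab Hd Hc.
  assert (pr1 : forall c, a < c < b -> derivable_pt f c).
  { intros c Hc'. exists (df c). apply is_derive_Reals. now apply Hd. }
  assert (pr2 : forall c, a < c < b -> derivable_pt id c).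
  { intros c _. apply derivable_pt_id. }
  destruct (MVT f id a b pr1 pr2 Hab Hc) as [c [P HP]].
  { intros; apply derivable_continuous_pt, derivable_pt_id. }
  exists c; split; auto.
  assert (E1 : derive_pt f c (pr1 c P) = df c).
  { apply derive_pt_eq_0. apply is_derive_Reals. now apply Hd. }
  assert (E2 : derive_pt id c (pr2 c P) = 1).
  { apply derive_pt_eq_0. apply derivable_pt_lim_id. }
  rewrite E1, E2 in HP. unfold id in HP. lra.
Qed.

Lemma mono_deriv f df a b :
  a <= b ->
  (forall x, a < x < b -> is_derive f x (df x)) ->
  (forall x, a <= x <= b -> continuity_pt f x) ->
  (forall x, a < x < b -> 0 <= df x) -> f a <= f b.
Proof.
  intros Hab Hd Hc Hp. destruct Hab as [Hab|Hab]; [|subst; lra].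
  destruct (MVT_open f df a b Hab Hd Hc) as [c [Hc1 Hc2]].
  assert (0 <= df c) by (apply Hp; lra). nra.
Qed.

Lemma smono_deriv f df a b :
  a < b ->
  (forall x, a < x < b -> is_derive f x (df x)) ->
  (forall x, a <= x <= b -> continuity_pt f x) ->
  (forall x, a < x < b -> 0 < df x) -> f a < f b.
Proof.
  intros Hab Hd Hc Hp.
  destruct (MVT_open f df a b Hab Hd Hc) as [c [Hc1 Hc2]].
  assert (0 < df c) by (apply Hp; lra). nra.
Qed.

Lemma mono_deriv_g f df a b :
  a <= b -> (forall x, a <= x <= b -> is_derive f x (df x)) ->
  (forall x, a < x < b -> 0 <= df x) -> f a <= f b.
Proof.
  intros Hab Hd Hp. apply (mono_deriv f df); auto.
  - intros; apply Hd; lra.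
  - intros; eapply deriv_contpt, Hd; lra.
Qed.

Lemma smono_deriv_g f df a b :
  a < b -> (forall x, a <= x <= b -> is_derive f x (df x)) ->
  (forall x, a < x < b -> 0 < df x) -> f a < f b.
Proof.
  intros Hab Hd Hp. apply (smono_deriv f df); auto.
  - intros; apply Hd; lra.
  - intros; eapply deriv_contpt, Hd; lra.
Qed.

Lemma deriv_local f x l : is_derive f x l -> 0 < l ->
  exists d, 0 < d /\ forall h, 0 < h < d -> f x < f (x + h) /\ f (x - h) < f x.
Proof.
  intros H Hl. apply is_derive_Reals in H.
  destruct (H (l/2) ltac:(lra)) as [d Hd].
  exists d; split; [apply cond_pos|]. intros h Hh.
  assert (A := Hd h ltac:(lra) ltac:(rewrite Rabs_right; lra)).
  assert (B := Hd (-h) ltac:(lra) ltac:(rewrite Rabs_left; lra)).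
  apply Rabs_lt_between in A. apply Rabs_lt_between in B.
  destruct A as [A1 _]. destruct B as [B1 _].
  split.
  - assert (l/2 < (f (x + h) - f x)/h) by lra.
    apply (Rmult_lt_compat_r h) in H0; [|lra].
    replace ((f (x + h) - f x) / h * h) with (f (x + h) - f x) in H0 by (field; lra). nra.
  - replace (x - h) with (x + - h) by ring.
    assert (l/2 < (f (x + - h) - f x)/ - h) by lra.
    apply (Rmult_lt_compat_r h) in H0; [|lra].
    replace ((f (x + - h) - f x) / - h * h) with (-(f (x + - h) - f x)) in H0 by (field; lra). nra.
Qed.

Lemma deriv_local_neg f x l : is_derive f x l -> l < 0 ->
  exists d, 0 < d /\ forall h, 0 < h < d -> f (x + h) < f x /\ f x < f (x - h).
Proof.
  intros H Hl.
  destruct (deriv_local (fun y => - f y) x (- l)) as [d [Hd1 Hd2]].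
  - apply (is_derive_opp f x l) in H. exact H.
  - lra.
  - exists d; split; auto. intros h Hh. destruct (Hd2 h Hh). lra.
Qed.

Lemma fermat_max f x l a b : a < x < b -> is_derive f x l ->
  (forall y, a < y < b -> f y <= f x) -> l = 0.
Proof.
  intros Hx H Hm.
  destruct (Rtotal_order l 0) as [Hl|[Hl|Hl]]; auto.
  - destruct (deriv_local_neg f x l H Hl) as [d [Hd1 Hd2]].
    set (h := Rmin (d/2) ((x - a)/2)).
    assert (0 < h < d) by (unfold h; split; [apply Rmin_pos; lra| apply Rle_lt_trans with (d/2); [apply Rmin_l|lra]]).
    destruct (Hd2 h H0). assert (f (x - h) <= f x).
    { assert (h <= (x-a)/2) by apply Rmin_r. apply Hm. lra. }
    lra.
  - destruct (deriv_local f x l H Hl) as [d [Hd1 Hd2]].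
    set (h := Rmin (d/2) ((b - x)/2)).
    assert (0 < h < d) by (unfold h; split; [apply Rmin_pos; lra| apply Rle_lt_trans with (d/2); [apply Rmin_l|lra]]).
    destruct (Hd2 h H0). assert (f (x + h) <= f x).
    { assert (h <= (b-x)/2) by apply Rmin_r. apply Hm. lra. }
    lra.
Qed.

Lemma ftc (f : R -> R) (c x : R) : (forall y, continuous f y) ->
  is_derive (fun y => RInt f c y) x (f x).
Proof.
  intros Hf. apply is_derive_RInt with (a := c).
  - apply filter_forall. intros y. apply RInt_correct.
    apply ex_RInt_continuous. intros; apply Hf.
  - apply Hf.
Qed.

Lemma is_lim_pinf_intro f (l : R) :
  (forall eps, 0 < eps -> exists M, forall x, M < x -> Rabs (f x - l) < eps) ->
  is_lim f p_infty l.
Proof.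
  intros H. apply is_lim_spec. intros eps. destruct (H eps (cond_pos eps)) as [M HM].
  exists M. exact HM.
Qed.

Lemma is_lim_pinf_elim f (l : R) : is_lim f p_infty l ->
  forall eps, 0 < eps -> exists M, forall x, M < x -> Rabs (f x - l) < eps.
Proof.
  intros H eps Heps. apply is_lim_spec in H. unfold is_lim' in H. destruct (H (mkposreal eps Heps)) as [M HM].
  exists M. exact HM.
Qed.

Lemma is_lim_minf_intro f (l : R) :
  (forall eps, 0 < eps -> exists M, forall x, x < M -> Rabs (f x - l) < eps) ->
  is_lim f m_infty l.
Proof.
  intros H. apply is_lim_spec. intros eps. destruct (H eps (cond_pos eps)) as [M HM].
  exists M. exact HM.
Qed.

Lemma is_lim_minf_elim f (l : R) : is_lim f m_infty l ->
  forall eps, 0 < eps -> exists M, forall x, x < M -> Rabs (f x - l) < eps.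
Proof.
  intros H eps Heps. apply is_lim_spec in H. unfold is_lim' in H. destruct (H (mkposreal eps Heps)) as [M HM].
  exists M. exact HM.
Qed.

Lemma contpt_eps f x : continuity_pt f x -> forall eps, 0 < eps ->
  exists d, 0 < d /\ forall y, Rabs (y - x) < d -> Rabs (f y - f x) < eps.
Proof.
  intros H eps He. destruct (H eps He) as [d [Hd H2]]. exists d. split; auto.
  intros y Hy. destruct (Req_dec y x) as [E|E].
  - subst. rewrite Rminus_diag, Rabs_R0. lra.
  - apply (H2 y). split; [split; [exact I| auto]| exact Hy].
Qed.

Lemma first_cross f b c : 0 < b -> (forall x, 0 <= x <= b -> continuity_pt f x) ->
  f 0 < c -> c <= f b ->
  exists y, 0 < y <= b /\ f y = c /\ forall z, 0 <= z < y -> f z < c.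
Proof.
  intros Hb Hc H0 Hbc.
  set (E := fun x => 0 <= x <= b /\ forall z, 0 <= z <= x -> f z < c).
  assert (HE0 : E 0). { split; [lra|]. intros z Hz. replace z with 0 by lra. auto. }
  assert (HEb : bound E). { exists b. intros x [Hx _]. lra. }
  destruct (completeness E HEb (ex_intro _ 0 HE0)) as [y [Hy1 Hy2]].
  assert (y0 : 0 <= y) by (apply Hy1; auto).
  assert (yb : y <= b) by (apply Hy2; intros x [Hx _]; lra).
  assert (Hlow : forall z, 0 <= z < y -> f z < c).
  { intros z Hz. destruct (classic (exists x, E x /\ z < x)) as [[x [[_ Hx] Hzx]]|Hn].
    - apply Hx; lra.
    - exfalso. assert (y <= z). { apply Hy2. intros x Ex. destruct (Rle_dec x z); auto.
        exfalso. apply Hn. exists x. split; auto. lra. } lra. }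
  destruct (Rtotal_order (f y) c) as [Hlt|[Heq|Hgt]].
  - exfalso. destruct (contpt_eps f y (Hc y ltac:(lra)) (c - f y) ltac:(lra)) as [d [Hd Hd2]].
    assert (yb' : y < b). { destruct yb as [|E']; auto. subst. lra. }
    set (y' := Rmin (y + d/2) b).
    assert (y < y') by (unfold y'; apply Rmin_glb_lt; lra).
    assert (y' <= y + d/2) by apply Rmin_l. assert (y' <= b) by apply Rmin_r.
    assert (E y'). { split; [lra|]. intros z Hz. destruct (Rlt_le_dec z y).
      - apply Hlow; lra.
      - assert (Rabs (f z - f y) < c - f y) by (apply Hd2; apply Rabs_lt_between; lra).
        apply Rabs_lt_between in H3. lra. }
    assert (y' <= y) by (apply Hy1; auto). lra.
  - exists y. assert (0 < y). { destruct y0 as [|E']; auto. subst. lra. } repeat split; auto; lra.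
  - exfalso. destruct (contpt_eps f y (Hc y ltac:(lra)) (f y - c) ltac:(lra)) as [d [Hd Hd2]].
    set (z := Rmax 0 (y - d/2)).
    assert (0 <= z) by apply Rmax_l. assert (y - d/2 <= z) by apply Rmax_r.
    assert (z <= y). { unfold z. apply Rmax_lub; lra. }
    assert (Hfz : Rabs (f z - f y) < f y - c) by (apply Hd2; apply Rabs_lt_between; lra).
    apply Rabs_lt_between in Hfz.
    assert (Hzy : z < y \/ z = y) by lra. destruct Hzy as [Hzy|Hzy].
    + assert (f z < c) by (apply Hlow; lra). lra.
    + assert (z = 0 \/ 0 < z) as [Hz0|Hz0] by lra.
      * assert (Hy0 : y = 0) by lra. rewrite Hy0 in Hgt. lra.
      * assert (y - d/2 < y) by lra. unfold z in Hzy.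
        unfold Rmax in Hzy, Hz0. destruct (Rle_dec 0 (y - d/2)); lra.
Qed.

Lemma mono_lim f B : (forall x y, 0 <= x <= y -> f x <= f y) -> (forall x, 0 <= x -> f x <= B) ->
  exists l : R, is_lim f p_infty l /\ (forall x, 0 <= x -> f x <= l).
Proof.
  intros Hm HB.
  set (E := fun v => exists x, 0 <= x /\ v = f x).
  assert (HEb : bound E). { exists B. intros v [x [Hx ->]]. auto. }
  destruct (completeness E HEb (ex_intro _ (f 0) (ex_intro _ 0 (conj (Rle_refl 0) eq_refl)))) as [l [Hl1 Hl2]].
  exists l. split.
  - apply is_lim_pinf_intro. intros eps He.
    destruct (classic (exists x, 0 <= x /\ l - eps < f x)) as [[x [Hx Hfx]]|Hn].
    + exists x. intros y Hy. assert (f x <= f y) by (apply Hm; lra).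
      assert (f y <= l) by (apply Hl1; exists y; split; [lra|auto]).
      apply Rabs_lt_between; lra.
    + exfalso. assert (l <= l - eps). { apply Hl2. intros v [x [Hx ->]].
        destruct (Rle_dec (f x) (l - eps)); auto. exfalso; apply Hn; exists x; split; auto; lra. }
      lra.
  - intros x Hx. apply Hl1. exists x; split; auto.
Qed.

Lemma mono_lim_dec f B : (forall x y, 0 <= x <= y -> f y <= f x) -> (forall x, 0 <= x -> B <= f x) ->
  exists l : R, is_lim f p_infty l /\ (forall x, 0 <= x -> l <= f x).
Proof.
  intros Hm HB. destruct (mono_lim (fun x => - f x) (- B)) as [l [Hl1 Hl2]].
  - intros x y Hxy. specialize (Hm x y Hxy). lra.
  - intros x Hx. specialize (HB x Hx). lra.
  - exists (- l). split.
    + apply is_lim_pinf_intro. intros eps He. destruct (is_lim_pinf_elim _ _ Hl1 eps He) as [M HM].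
      exists M. intros x Hx. specialize (HM x Hx). replace (f x - - l) with (- (- f x - l)) by ring.
      rewrite Rabs_Ropp. auto.
    + intros x Hx. specialize (Hl2 x Hx). lra.
Qed.

Lemma deriv_bound (g h B b : R -> R) x : 0 <= x ->
  (forall s, 0 <= s <= x -> is_derive g s (h s)) ->
  (forall s, 0 <= s <= x -> is_derive B s (b s)) ->
  (forall s, 0 <= s <= x -> Rabs (h s) <= b s) ->
  Rabs (g x - g 0) <= B x - B 0.
Proof.
  intros Hx Hg HB Hb.
  assert (A1 : (fun s => B s - g s) 0 <= (fun s => B s - g s) x).
  { apply (mono_deriv_g (fun s => B s - g s) (fun s => b s - h s) 0 x); auto.
    - intros s Hs. apply (is_derive_minus B g s (b s) (h s)); auto.
    - intros s Hs. specialize (Hb s ltac:(lra)). apply Rabs_le_between in Hb. lra. }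
  assert (A2 : (fun s => B s + g s) 0 <= (fun s => B s + g s) x).
  { apply (mono_deriv_g (fun s => B s + g s) (fun s => b s + h s) 0 x); auto.
    - intros s Hs. apply (is_derive_plus B g s (b s) (h s)); auto.
    - intros s Hs. specialize (Hb s ltac:(lra)). apply Rabs_le_between in Hb. lra. }
  simpl in A1, A2. apply Rabs_le_between. lra.
Qed.

Lemma is_derive_cRInt (c : R) (f : R -> R) x : (forall y, continuous f y) ->
  is_derive (fun y => c + RInt f 0 y) x (f x).
Proof.
  intros Hf. 
  assert (H1 : is_derive (fun _ : R => c) x 0).
  { apply (@is_derive_const R_AbsRing R_NormedModule c x). }
  assert (H2 := ftc f 0 x Hf).
  assert (H3 := is_derive_plus _ _ _ _ _ H1 H2). simpl in H3.
  replace (f x) with (0 + f x) by ring. exact H3.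
Qed.

Lemma cRInt_0 (c : R) (f : R -> R) : c + RInt f 0 0 = c.
Proof. rewrite RInt_point. unfold zero; simpl. ring. Qed.

Lemma geom_small K y : (forall n, Rabs y <= K * (/2)^n) -> y = 0.
Proof.
  intros H. destruct (Req_dec y 0) as [E|E]; auto. exfalso.
  assert (Hy : 0 < Rabs y) by (apply Rabs_pos_lt; auto).
  assert (HK : 0 < K). { specialize (H O). simpl in H. lra. }
  destruct (pow_lt_1_zero (/2) ltac:(rewrite Rabs_right; lra) (Rabs y / K) ltac:(apply Rdiv_lt_0_compat; lra)) as [N HN].
  specialize (HN N (le_n N)). specialize (H N).
  rewrite Rabs_right in HN by (apply Rle_ge, pow_le; lra).
  apply (Rmult_lt_compat_l K) in HN; auto.
  replace (K * (Rabs y / K)) with (Rabs y) in HN by (field; lra). lra.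
Qed.

Lemma cont_of_pt f x : continuity_pt f x -> continuous f x.
Proof. intros H; apply continuity_pt_filterlim; auto. Qed.

Lemma pt_of_cont f x : continuous f x -> continuity_pt f x.
Proof. intros H; apply continuity_pt_filterlim; auto. Qed.

Lemma Rmax0_lip s t : Rabs (Rmax s 0 - Rmax t 0) <= Rabs (s - t).
Proof.
  unfold Rmax. destruct (Rle_dec s 0); destruct (Rle_dec t 0);
  unfold Rabs; repeat destruct Rcase_abs; lra.
Qed.

Lemma Rmax0_cont s : continuity_pt (fun y => Rmax y 0) s.
Proof.
  intros eps He. exists eps. split; auto. intros y [_ Hy]. simpl in *. unfold R_dist in *.
  eapply Rle_lt_trans; [apply Rmax0_lip|auto].
Qed.

Lemma exd_contpt (f : R -> R) x : ex_derive f x -> continuity_pt f x.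
Proof. intros [l H]. eapply deriv_contpt; eauto. Qed.

Lemma within_eps (f : R -> R) (D : R -> Prop) c :
  filterlim f (within D (locally c)) (locally (f c)) ->
  forall eps, 0 < eps -> exists d, 0 < d /\ forall y, D y -> Rabs (y - c) < d -> Rabs (f y - f c) < eps.
Proof.
  intros H eps He.
  assert (H1 : locally (f c) (fun z => Rabs (z - f c) < eps)).
  { exists (mkposreal eps He). intros y Hy. exact Hy. }
  specialize (H _ H1). destruct H as [d Hd].
  exists d. split; [apply cond_pos|]. intros y Dy Hy. apply (Hd y); auto.
Qed.

Lemma sq_lt_abs d e : 0 < e -> d^2 < e^2 -> Rabs d < e.
Proof. intros He H. apply Rabs_def1; nra. Qed.

Lemma connect_interval (A B : R -> Prop) lo hi : lo < hi -> A lo -> B hi ->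
  (forall c, lo <= c <= hi -> A c -> B c -> False) ->
  (forall c, lo <= c <= hi -> A c -> exists d, 0 < d /\ forall c', lo <= c' <= hi -> Rabs (c' - c) < d -> A c') ->
  (forall c, lo <= c <= hi -> B c -> exists d, 0 < d /\ forall c', lo <= c' <= hi -> Rabs (c' - c) < d -> B c') ->
  exists c, lo <= c <= hi /\ ~ A c /\ ~ B c.
Proof.
  intros Hlh HA HB Hdis HoA HoB.
  set (S := fun c => lo <= c <= hi /\ forall c', lo <= c' <= c -> A c').
  assert (S0 : S lo). { split; [lra|]. intros c' Hc'. replace c' with lo by lra. auto. }
  assert (Sb : bound S). { exists hi. intros x [Hx _]. lra. }
  destruct (completeness S Sb (ex_intro _ lo S0)) as [s [Hs1 Hs2]].
  assert (slo : lo <= s) by (apply Hs1; auto).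
  assert (shi : s <= hi) by (apply Hs2; intros x [Hx _]; lra).
  assert (F : forall c', lo <= c' < s -> A c').
  { intros c' Hc'. destruct (classic (exists e, S e /\ c' < e)) as [[e [[_ He] Hce]]|Hn].
    - apply He; lra.
    - exfalso. assert (s <= c'). { apply Hs2. intros x Sx. destruct (Rle_dec x c'); auto.
        exfalso. apply Hn. exists x. split; auto. lra. } lra. }
  exists s. split; [lra|]. split.
  - intros As. destruct (HoA s ltac:(lra) As) as [d [Hd Hd2]].
    destruct (Req_dec s hi) as [E|E].
    + subst. apply (Hdis hi); auto; lra.
    + set (s' := Rmin (s + d/2) hi).
      assert (s'1 : s' <= s + d/2) by apply Rmin_l. assert (s'2 : s' <= hi) by apply Rmin_r.
      assert (s'3 : s < s') by (apply Rmin_glb_lt; lra).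
      assert (S s'). { split; [lra|]. intros c' Hc'. destruct (Rlt_le_dec c' s).
        - apply F; lra.
        - apply Hd2; [lra|]. apply Rabs_def1; lra. }
      assert (s' <= s) by (apply Hs1; auto). lra.
  - intros Bs. destruct (HoB s ltac:(lra) Bs) as [d [Hd Hd2]].
    destruct (Req_dec s lo) as [E|E].
    + subst. apply (Hdis lo); auto; lra.
    + set (c' := Rmax lo (s - d/2)).
      assert (c'1 : lo <= c') by apply Rmax_l. assert (c'2 : s - d/2 <= c') by apply Rmax_r.
      assert (c'3 : c' < s) by (apply Rmax_lub_lt; lra).
      apply (Hdis c'); [lra| apply F; lra| apply Hd2; [lra| apply Rabs_def1; lra]].
Qed.

Lemma lim_exp_minf K c : c < 0 -> 0 <= K -> is_lim (fun x => K * exp (- c * x)) m_infty 0.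
Proof.
  intros Hc HK. apply is_lim_minf_intro. intros eps He.
  set (M := ln (eps / (K + 1)) / (- c)).
  exists M. intros x Hx.
  rewrite Rminus_0_r, Rabs_right by (apply Rle_ge, Rmult_le_pos; [lra| left; apply exp_pos]).
  assert (H1 : - c * x < ln (eps / (K + 1))).
  { unfold M in Hx. apply (Rmult_lt_compat_l (- c)) in Hx; [|lra].
    replace (- c * (ln (eps / (K + 1)) / - c)) with (ln (eps / (K + 1))) in Hx by (field; lra). lra. }
  apply exp_increasing in H1. rewrite exp_ln in H1 by (apply Rdiv_lt_0_compat; lra).
  apply Rle_lt_trans with ((K + 1) * exp (- c * x)).
  { assert (0 < exp (- c * x)) by apply exp_pos. nra. }
  apply (Rmult_lt_compat_l (K + 1)) in H1; [|lra].
  replace ((K + 1) * (eps / (K + 1))) with eps in H1 by (field; lra). exact H1.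
Qed.

Lemma const_deriv f x y : x <= y -> (forall s, x < s < y -> is_derive f s 0) ->
  (forall s, x <= s <= y -> continuity_pt f s) -> f x = f y.
Proof.
  intros Hxy Hd Hc.
  assert (A : f x <= f y) by (apply (mono_deriv f (fun _ => 0) x y); auto; intros; lra).
  assert (B : - f x <= - f y).
  { apply (mono_deriv (fun s => - f s) (fun _ => - 0) x y); auto.
    - intros s Hs. apply (is_derive_opp f s 0). auto.
    - intros; apply continuity_pt_opp; auto.
    - intros; lra. }
  lra.
Qed.

Lemma small_zero y : (forall eps, 0 < eps -> Rabs y < eps) -> y = 0.
Proof.
  intros H. destruct (Req_dec y 0) as [|E]; auto. exfalso.
  assert (0 < Rabs y) by (apply Rabs_pos_lt; auto). specialize (H (Rabs y) H0). lra.
Qed.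

Section Picard.
Variables (G : R -> R) (L k a p0 : R).
Hypothesis HL : 0 <= L.
Hypothesis HG : forall x y, Rabs (G x - G y) <= L * Rabs (x - y).

Lemma G_contpt x : continuity_pt G x.
Proof.
  intros eps He. exists (eps / (L + 1)). split.
  { apply Rdiv_lt_0_compat; lra. }
  intros y [_ Hy]. simpl in *. unfold R_dist in *.
  eapply Rle_lt_trans; [apply HG|].
  apply Rle_lt_trans with ((L+1) * Rabs (y - x)).
  { assert (0 <= Rabs (y - x)) by apply Rabs_pos. nra. }
  apply (Rmult_lt_compat_l (L+1)) in Hy; [|lra].
  replace ((L + 1) * (eps / (L + 1))) with eps in Hy by (field; lra). exact Hy.
Qed.

Lemma G_cont x : continuous G x.
Proof. apply cont_of_pt, G_contpt. Qed.

Fixpoint pic (n : nat) : (R -> R) * (R -> R) :=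
  match n with
  | O => (fun _ => a, fun _ => p0)
  | Datatypes.S m => (fun x => a + RInt (snd (pic m)) 0 x,
            fun x => p0 + RInt (fun s => k * snd (pic m) s - G (fst (pic m) s)) 0 x)
  end.

Definition Tn n := fst (pic n).
Definition Pn n := snd (pic n).

Lemma pic_cont n : (forall x, continuous (Tn n) x) /\ (forall x, continuous (Pn n) x).
Proof.
  induction n as [|n [IH1 IH2]].
  - split; intros x; apply continuous_const.
  - assert (HF : forall y, continuous (fun s => k * Pn n s - G (Tn n s)) y).
    { intros y. apply cont_of_pt.
      apply continuity_pt_minus.
      + apply continuity_pt_mult; [apply continuity_pt_const; intros u v; auto| apply pt_of_cont; auto].
      + apply (continuity_pt_comp (Tn n) G y); [apply pt_of_cont; auto| apply G_contpt]. }
    split; intros x; simpl.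
    + apply (ex_derive_continuous (fun x => a + RInt (Pn n) 0 x)).
      exists (Pn n x). apply is_derive_cRInt. auto.
    + apply (ex_derive_continuous (fun x => p0 + RInt (fun s => k * Pn n s - G (Tn n s)) 0 x)).
      eexists. apply is_derive_cRInt. auto.
Qed.

Lemma pic_F_cont n y : continuous (fun s => k * Pn n s - G (Tn n s)) y.
Proof.
  destruct (pic_cont n) as [IH1 IH2]. apply cont_of_pt.
  apply continuity_pt_minus.
  + apply continuity_pt_mult; [apply continuity_pt_const; intros u v; auto| apply pt_of_cont; auto].
  + apply (continuity_pt_comp (Tn n) G y); [apply pt_of_cont; auto| apply G_contpt].
Qed.

Lemma pic_dT n x : is_derive (Tn (Datatypes.S n)) x (Pn n x).
Proof. apply is_derive_cRInt. apply pic_cont. Qed.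

Lemma pic_dP n x : is_derive (Pn (Datatypes.S n)) x (k * Pn n x - G (Tn n x)).
Proof. apply (is_derive_cRInt p0 (fun s => k * Pn n s - G (Tn n s))). apply pic_F_cont. Qed.

Lemma pic_0 n : Tn n 0 = a /\ Pn n 0 = p0.
Proof. destruct n; simpl; [auto| split; apply cRInt_0]. Qed.

Definition M := 1 + Rabs k + L.
Definition C0 := Rabs p0 + Rabs (k * p0 - G a).
Definition D := C0 / (2 * M).

Lemma M_pos : 1 <= M.
Proof. unfold M. assert (0 <= Rabs k) by apply Rabs_pos. lra. Qed.

Lemma D_nonneg : 0 <= D.
Proof.
  unfold D, C0. assert (1 <= M) by apply M_pos.
  assert (0 <= Rabs p0) by apply Rabs_pos. assert (0 <= Rabs (k*p0 - G a)) by apply Rabs_pos.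
  apply Rdiv_le_0_compat; lra.
Qed.

Definition en n x := Rabs (Tn (Datatypes.S n) x - Tn n x) + Rabs (Pn (Datatypes.S n) x - Pn n x).

Lemma exp_deriv_c (c : R) x : is_derive (fun s => c * exp (2 * M * s) / (2 * M)) x (c * exp (2 * M * x)).
Proof.
  assert (1 <= M) by apply M_pos.
  auto_derive; auto. field. lra.
Qed.

Lemma en_bound n x : 0 <= x -> en n x <= D * (/2)^n * exp (2 * M * x).
Proof.
  assert (HM : 1 <= M) by apply M_pos. assert (HD := D_nonneg).
  revert x. induction n as [|n IH]; intros x Hx.
  - unfold en. simpl pow.
    assert (E1 : Rabs (Tn 1 x - Tn 0 x) <= Rabs p0 * x - Rabs p0 * 0).
    { replace (Tn 0 x) with (Tn 1 0) by (unfold Tn, Pn; simpl; rewrite cRInt_0; reflexivity).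
      apply (deriv_bound (Tn 1) (fun _ => p0) (fun s => Rabs p0 * s) (fun _ => Rabs p0)); auto.
      - intros s _. apply (pic_dT 0 s).
      - intros s _. auto_derive; auto; ring.
      - intros; lra. }
    assert (E2 : Rabs (Pn 1 x - Pn 0 x) <= Rabs (k*p0 - G a) * x - Rabs (k*p0 - G a) * 0).
    { replace (Pn 0 x) with (Pn 1 0) by (unfold Tn, Pn; simpl; rewrite cRInt_0; reflexivity).
      apply (deriv_bound (Pn 1) (fun _ => k * p0 - G a) (fun s => Rabs (k*p0 - G a) * s) (fun _ => Rabs (k*p0 - G a))); auto.
      - intros s _. apply (pic_dP 0 s).
      - intros s _. auto_derive; auto; ring.
      - intros; lra. }
    assert (C0 * x <= D * exp (2 * M * x)).
    { assert (1 + 2 * M * x <= exp (2 * M * x)) by apply exp_ineq1_le.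
      unfold D. replace (C0 * x) with (C0 / (2 * M) * (2 * M * x)) by (field; lra).
      apply Rmult_le_compat_l; [exact HD| lra]. }
    unfold C0 in H. lra.
  - unfold en.
    set (b := fun s => D * (/2)^n * exp (2 * M * s)).
    assert (E1 : Rabs (Tn (Datatypes.S (Datatypes.S n)) x - Tn (Datatypes.S n) x) <=
                 D * (/2)^n * exp (2 * M * x) / (2 * M) - D * (/2)^n * exp (2 * M * 0) / (2 * M)).
    { replace (Rabs (Tn (Datatypes.S (Datatypes.S n)) x - Tn (Datatypes.S n) x)) with
        (Rabs ((fun s => Tn (Datatypes.S (Datatypes.S n)) s - Tn (Datatypes.S n) s) x - (fun s => Tn (Datatypes.S (Datatypes.S n)) s - Tn (Datatypes.S n) s) 0)).
      2:{ cbv beta. destruct (pic_0 (Datatypes.S (Datatypes.S n))) as [A1 _]. destruct (pic_0 (Datatypes.S n)) as [A2 _].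
          rewrite A1, A2. f_equal. ring. }
      apply (deriv_bound (fun s => Tn (Datatypes.S (Datatypes.S n)) s - Tn (Datatypes.S n) s) (fun s => Pn (Datatypes.S n) s - Pn n s) (fun s => D * (/2)^n * exp (2 * M * s) / (2 * M)) b); auto.
      - intros s _. apply (is_derive_minus _ _ s _ _ (pic_dT (Datatypes.S n) s) (pic_dT n s)).
      - intros s _. apply exp_deriv_c.
      - intros s Hs. specialize (IH s ltac:(lra)). unfold en in IH. unfold b.
        assert (0 <= Rabs (Tn (Datatypes.S n) s - Tn n s)) by apply Rabs_pos. lra. }
    assert (E2 : Rabs (Pn (Datatypes.S (Datatypes.S n)) x - Pn (Datatypes.S n) x) <=
                 (M - 1) * (D * (/2)^n) * exp (2 * M * x) / (2 * M) - (M - 1) * (D * (/2)^n) * exp (2 * M * 0) / (2 * M)).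
    { replace (Rabs (Pn (Datatypes.S (Datatypes.S n)) x - Pn (Datatypes.S n) x)) with
        (Rabs ((fun s => Pn (Datatypes.S (Datatypes.S n)) s - Pn (Datatypes.S n) s) x - (fun s => Pn (Datatypes.S (Datatypes.S n)) s - Pn (Datatypes.S n) s) 0)).
      2:{ cbv beta. destruct (pic_0 (Datatypes.S (Datatypes.S n))) as [_ A1]. destruct (pic_0 (Datatypes.S n)) as [_ A2].
          rewrite A1, A2. f_equal. ring. }
      apply (deriv_bound (fun s => Pn (Datatypes.S (Datatypes.S n)) s - Pn (Datatypes.S n) s) (fun s => (k * Pn (Datatypes.S n) s - G (Tn (Datatypes.S n) s)) - (k * Pn n s - G (Tn n s)))
               (fun s => (M - 1) * (D * (/2)^n) * exp (2 * M * s) / (2 * M)) (fun s => (M - 1) * (D * (/2)^n) * exp (2 * M * s))); auto.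
      - intros s _. apply (is_derive_minus _ _ s _ _ (pic_dP (Datatypes.S n) s) (pic_dP n s)).
      - intros s _. apply exp_deriv_c.
      - intros s Hs. specialize (IH s ltac:(lra)). unfold en in IH.
        replace (k * Pn (Datatypes.S n) s - G (Tn (Datatypes.S n) s) - (k * Pn n s - G (Tn n s))) with
          (k * (Pn (Datatypes.S n) s - Pn n s) - (G (Tn (Datatypes.S n) s) - G (Tn n s))) by ring.
        eapply Rle_trans; [apply Rabs_triang|]. rewrite Rabs_Ropp, Rabs_mult.
        assert (HG1 := HG (Tn (Datatypes.S n) s) (Tn n s)).
        assert (0 <= Rabs (Tn (Datatypes.S n) s - Tn n s)) by apply Rabs_pos.
        assert (0 <= Rabs (Pn (Datatypes.S n) s - Pn n s)) by apply Rabs_pos.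
        assert (0 <= Rabs k) by apply Rabs_pos.
        assert (Rabs k * Rabs (Pn (Datatypes.S n) s - Pn n s) + L * Rabs (Tn (Datatypes.S n) s - Tn n s) <=
                (Rabs k + L) * (Rabs (Tn (Datatypes.S n) s - Tn n s) + Rabs (Pn (Datatypes.S n) s - Pn n s))) by nra.
        replace (M - 1) with (Rabs k + L) by (unfold M; ring).
        assert (0 <= Rabs k + L) by lra. nra. }
    rewrite Rmult_0_r, exp_0 in E1, E2.
    assert (0 < exp (2 * M * x)) by apply exp_pos.
    assert (0 <= D * (/2)^n) by (apply Rmult_le_pos; [auto| apply pow_le; lra]).
    assert (LHS : Rabs (Tn (Datatypes.S (Datatypes.S n)) x - Tn (Datatypes.S n) x) + Rabs (Pn (Datatypes.S (Datatypes.S n)) x - Pn (Datatypes.S n) x) <=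
      M * (D * (/2)^n) * (exp (2 * M * x) - 1) / (2 * M)).
    { replace (M * (D * (/2)^n) * (exp (2 * M * x) - 1) / (2 * M)) with
        ((D * (/2)^n * exp (2 * M * x) / (2 * M) - D * (/2)^n * 1 / (2 * M)) +
         ((M - 1) * (D * (/2)^n) * exp (2 * M * x) / (2 * M) - (M - 1) * (D * (/2)^n) * 1 / (2 * M))) by (field; lra).
      lra. }
    eapply Rle_trans; [exact LHS|].
    replace (M * (D * (/2)^n) * (exp (2 * M * x) - 1) / (2 * M)) with ((D * (/2)^n) * (exp (2 * M * x) - 1) / 2) by (field; lra).
    simpl pow. nra.
Qed.

Lemma tail_bound n m x : 0 <= x -> (n <= m)%nat ->
  Rabs (Tn m x - Tn n x) + Rabs (Pn m x - Pn n x) <= 2 * D * exp (2 * M * x) * ((/2)^n - (/2)^m).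
Proof.
  intros Hx Hnm. induction Hnm as [|m Hnm IH].
  - rewrite !Rminus_diag, Rabs_R0. lra.
  - assert (E := en_bound m x Hx). unfold en in E.
    assert (A1 := Rabs_triang (Tn (Datatypes.S m) x - Tn m x) (Tn m x - Tn n x)).
    assert (A2 := Rabs_triang (Pn (Datatypes.S m) x - Pn m x) (Pn m x - Pn n x)).
    replace (Tn (Datatypes.S m) x - Tn m x + (Tn m x - Tn n x)) with (Tn (Datatypes.S m) x - Tn n x) in A1 by ring.
    replace (Pn (Datatypes.S m) x - Pn m x + (Pn m x - Pn n x)) with (Pn (Datatypes.S m) x - Pn n x) in A2 by ring.
    replace (2 * D * exp (2 * M * x) * ((/ 2) ^ n - (/ 2) ^ Datatypes.S m)) with
      (2 * D * exp (2 * M * x) * ((/ 2) ^ n - (/ 2) ^ m) + D * (/2)^m * exp (2 * M * x)) by (simpl; field).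
    lra.
Qed.

Lemma geom_to0 K eps : 0 < eps -> exists N, forall n, (N <= n)%nat -> K * (/2)^n < eps.
Proof.
  intros He. destruct (Rle_dec K 0) as [HK|HK].
  - exists O. intros n _. assert (0 <= (/2)^n) by (apply pow_le; lra). nra.
  - destruct (pow_lt_1_zero (/2) ltac:(rewrite Rabs_right; lra) (eps / K) ltac:(apply Rdiv_lt_0_compat; lra)) as [N HN].
    exists N. intros n Hn. specialize (HN n Hn).
    rewrite Rabs_right in HN by (apply Rle_ge, pow_le; lra).
    apply (Rmult_lt_compat_l K) in HN; [|lra].
    replace (K * (eps / K)) with eps in HN by (field; lra). lra.
Qed.

Lemma tail_simple N n x : 0 <= x -> (N <= n)%nat ->
  Rabs (Tn n x - Tn N x) <= 2 * D * exp (2 * M * x) * (/2)^N /\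
  Rabs (Pn n x - Pn N x) <= 2 * D * exp (2 * M * x) * (/2)^N.
Proof.
  intros Hx Hn. assert (B := tail_bound N n x Hx Hn). assert (HD := D_nonneg).
  assert (0 <= (/2)^n) by (apply pow_le; lra).
  assert (0 <= 2 * D * exp (2 * M * x)) by (apply Rmult_le_pos; [lra| left; apply exp_pos]).
  assert (0 <= Rabs (Pn n x - Pn N x)) by apply Rabs_pos.
  assert (0 <= Rabs (Tn n x - Tn N x)) by apply Rabs_pos.
  split; nra.
Qed.

Lemma cauchy_T x : 0 <= x -> ex_finite_lim_seq (fun n => Tn n x) /\ ex_finite_lim_seq (fun n => Pn n x).
Proof.
  intros Hx.
  split; apply ex_lim_seq_cauchy_corr; intros eps;
  destruct (geom_to0 (4 * D * exp (2 * M * x)) eps (cond_pos eps)) as [N HN];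
  exists N; intros n m Hn Hm; specialize (HN N (le_n N));
  destruct (tail_simple N n x Hx Hn) as [A1 A2]; destruct (tail_simple N m x Hx Hm) as [B1 B2].
  - assert (C := Rabs_triang (Tn n x - Tn N x) (- (Tn m x - Tn N x))). rewrite Rabs_Ropp in C.
    replace (Tn n x - Tn N x + - (Tn m x - Tn N x)) with (Tn n x - Tn m x) in C by ring. lra.
  - assert (C := Rabs_triang (Pn n x - Pn N x) (- (Pn m x - Pn N x))). rewrite Rabs_Ropp in C.
    replace (Pn n x - Pn N x + - (Pn m x - Pn N x)) with (Pn n x - Pn m x) in C by ring. lra.
Qed.

Definition Tl x := real (Lim_seq (fun n => Tn n x)).
Definition Pl x := real (Lim_seq (fun n => Pn n x)).

Lemma lim_bound n x : 0 <= x ->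
  Rabs (Tl x - Tn n x) <= 2 * D * exp (2 * M * x) * (/2)^n /\
  Rabs (Pl x - Pn n x) <= 2 * D * exp (2 * M * x) * (/2)^n.
Proof.
  intros Hx. destruct (cauchy_T x Hx) as [C1 C2].
  apply Lim_seq_correct' in C1. apply Lim_seq_correct' in C2.
  apply is_lim_seq_spec in C1. apply is_lim_seq_spec in C2.
  split; apply Rnot_lt_le; intros Hc.
  - set (e := Rabs (Tl x - Tn n x) - 2 * D * exp (2 * M * x) * (/2)^n).
    destruct (C1 (mkposreal e ltac:(unfold e; lra))) as [N1 HN1].
    set (m := Nat.max N1 n). specialize (HN1 m (Nat.le_max_l _ _)). simpl in HN1.
    destruct (tail_simple n m x Hx (Nat.le_max_r _ _)) as [A _].
    assert (C := Rabs_triang (Tl x - Tn m x) (Tn m x - Tn n x)).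
    replace (Tl x - Tn m x + (Tn m x - Tn n x)) with (Tl x - Tn n x) in C by ring.
    unfold Tl in C. rewrite <- Rabs_Ropp, Ropp_minus_distr in HN1. unfold e, Tl in HN1. lra.
  - set (e := Rabs (Pl x - Pn n x) - 2 * D * exp (2 * M * x) * (/2)^n).
    destruct (C2 (mkposreal e ltac:(unfold e; lra))) as [N1 HN1].
    set (m := Nat.max N1 n). specialize (HN1 m (Nat.le_max_l _ _)). simpl in HN1.
    destruct (tail_simple n m x Hx (Nat.le_max_r _ _)) as [_ A].
    assert (C := Rabs_triang (Pl x - Pn m x) (Pn m x - Pn n x)).
    replace (Pl x - Pn m x + (Pn m x - Pn n x)) with (Pl x - Pn n x) in C by ring.
    unfold Pl in C. rewrite <- Rabs_Ropp, Ropp_minus_distr in HN1. unfold e, Pl in HN1. lra.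
Qed.

Lemma lim_max_cont (f : nat -> R -> R) (fl : R -> R) :
  (forall n x, continuous (f n) x) ->
  (forall n x, 0 <= x -> Rabs (fl x - f n x) <= 2 * D * exp (2 * M * x) * (/2)^n) ->
  forall s0, continuity_pt (fun s => fl (Rmax s 0)) s0.
Proof.
  intros Hc Hb s0 eps He.
  set (X := Rabs s0 + 1).
  destruct (geom_to0 (2 * D * exp (2 * M * X)) (eps/3) ltac:(lra)) as [N HN].
  specialize (HN N (le_n N)).
  assert (Hcn : continuity_pt (fun s => f N (Rmax s 0)) s0).
  { apply (continuity_pt_comp (fun s => Rmax s 0) (f N) s0); [apply Rmax0_cont| apply pt_of_cont, Hc]. }
  destruct (contpt_eps _ _ Hcn (eps/3) ltac:(lra)) as [d [Hd Hd2]].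
  exists (Rmin d 1). split; [apply Rmin_pos; lra|].
  intros y [_ Hy]. simpl in Hy. unfold R_dist in Hy. simpl. unfold R_dist.
  assert (Hy1 : Rabs (y - s0) < d) by (eapply Rlt_le_trans; [exact Hy| apply Rmin_l]).
  assert (Hy2 : Rabs (y - s0) < 1) by (eapply Rlt_le_trans; [exact Hy| apply Rmin_r]).
  specialize (Hd2 y Hy1).
  assert (HD := D_nonneg). assert (HM := M_pos).
  assert (Kmono : forall z, 0 <= z <= X -> 2 * D * exp (2 * M * z) * (/2)^N <= 2 * D * exp (2 * M * X) * (/2)^N).
  { intros z Hz. apply Rmult_le_compat_r; [apply pow_le; lra|].
    apply Rmult_le_compat_l; [lra|]. destruct (Req_dec z X) as [->|]; [lra|].
    left; apply exp_increasing; nra. }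
  assert (Hmy : 0 <= Rmax y 0 <= X).
  { split; [apply Rmax_r|]. apply Rmax_lub; [|unfold X; assert (0 <= Rabs s0) by apply Rabs_pos; lra].
    unfold X. apply Rabs_lt_between in Hy2. assert (s0 <= Rabs s0) by apply RRle_abs. lra. }
  assert (Hms : 0 <= Rmax s0 0 <= X).
  { split; [apply Rmax_r|]. apply Rmax_lub; unfold X; [assert (s0 <= Rabs s0) by apply RRle_abs| assert (0 <= Rabs s0) by apply Rabs_pos]; lra. }
  assert (B1 := Hb N (Rmax y 0) (proj1 Hmy)). assert (B2 := Hb N (Rmax s0 0) (proj1 Hms)).
  assert (K1 := Kmono _ Hmy). assert (K2 := Kmono _ Hms).
  replace (fl (Rmax y 0) - fl (Rmax s0 0)) with
    ((fl (Rmax y 0) - f N (Rmax y 0)) + (f N (Rmax y 0) - f N (Rmax s0 0)) - (fl (Rmax s0 0) - f N (Rmax s0 0))) by ring.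
  eapply Rle_lt_trans; [apply Rabs_triang|]. rewrite Rabs_Ropp.
  eapply Rle_lt_trans; [apply Rplus_le_compat_r; apply Rabs_triang|]. lra.
Qed.

Lemma Tl_cont s : continuity_pt (fun s => Tl (Rmax s 0)) s.
Proof. apply (lim_max_cont Tn Tl); [intros; apply pic_cont| intros; apply lim_bound; auto]. Qed.
Lemma Pl_cont s : continuity_pt (fun s => Pl (Rmax s 0)) s.
Proof. apply (lim_max_cont Pn Pl); [intros; apply pic_cont| intros; apply lim_bound; auto]. Qed.

Definition FF s := k * Pl (Rmax s 0) - G (Tl (Rmax s 0)).

Lemma FF_cont s : continuous FF s.
Proof.
  apply cont_of_pt. unfold FF. apply continuity_pt_minus.
  - apply continuity_pt_mult; [apply continuity_pt_const; intros u v; auto| apply Pl_cont].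
  - apply (continuity_pt_comp (fun s => Tl (Rmax s 0)) G s); [apply Tl_cont| apply G_contpt].
Qed.

Definition Ps x := p0 + RInt FF 0 x.

Lemma Ps_deriv x : is_derive Ps x (FF x).
Proof. apply is_derive_cRInt. apply FF_cont. Qed.

Lemma Ps_cont x : continuous Ps x.
Proof. apply (ex_derive_continuous Ps). exists (FF x). apply Ps_deriv. Qed.

Definition Ts x := a + RInt Ps 0 x.

Lemma Ts_deriv x : is_derive Ts x (Ps x).
Proof. apply is_derive_cRInt. apply Ps_cont. Qed.

Lemma Ps_0 : Ps 0 = p0.
Proof. apply cRInt_0. Qed.
Lemma Ts_0 : Ts 0 = a.
Proof. apply cRInt_0. Qed.

Lemma Rmax_pos_id s : 0 <= s -> Rmax s 0 = s.
Proof. intros; apply Rmax_left; lra. Qed.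

Lemma Ps_eq x : 0 <= x -> Ps x = Pl x.
Proof.
  intros Hx. assert (HD := D_nonneg). assert (HM := M_pos).
  set (c := fun n:nat => (M - 1) * (4 * D * (/2)^n)).
  assert (Hc : forall n, 0 <= c n).
  { intros n. unfold c. apply Rmult_le_pos; [lra|]. apply Rmult_le_pos; [lra| apply pow_le; lra]. }
  assert (B : forall n, Rabs (Ps x - Pn (Datatypes.S n) x) <= c n * exp (2 * M * x) / (2 * M) - c n * exp (2 * M * 0) / (2 * M)).
  { intros n.
    replace (Rabs (Ps x - Pn (Datatypes.S n) x)) with (Rabs ((fun s => Ps s - Pn (Datatypes.S n) s) x - (fun s => Ps s - Pn (Datatypes.S n) s) 0)).
    2:{ cbv beta. rewrite Ps_0. destruct (pic_0 (Datatypes.S n)) as [_ A]. rewrite A. f_equal. ring. }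
    apply (deriv_bound (fun s => Ps s - Pn (Datatypes.S n) s) (fun s => FF s - (k * Pn n s - G (Tn n s)))
             (fun s => c n * exp (2 * M * s) / (2 * M)) (fun s => c n * exp (2 * M * s))); auto.
    - intros s _. apply (is_derive_minus _ _ s _ _ (Ps_deriv s) (pic_dP n s)).
    - intros s _. apply exp_deriv_c.
    - intros s Hs. unfold FF. rewrite Rmax_pos_id by lra.
      destruct (lim_bound n s ltac:(lra)) as [A1 A2].
      replace (k * Pl s - G (Tl s) - (k * Pn n s - G (Tn n s))) with
          (k * (Pl s - Pn n s) - (G (Tl s) - G (Tn n s))) by ring.
      eapply Rle_trans; [apply Rabs_triang|]. rewrite Rabs_Ropp, Rabs_mult.
      assert (HG1 := HG (Tl s) (Tn n s)).
      assert (0 <= Rabs k) by apply Rabs_pos.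
      assert (0 <= Rabs (Tl s - Tn n s)) by apply Rabs_pos.
      assert (0 <= Rabs (Pl s - Pn n s)) by apply Rabs_pos.
      unfold c. replace (M - 1) with (Rabs k + L) by (unfold M; ring).
      assert (0 <= exp (2 * M * s) * (/2)^n) by (apply Rmult_le_pos; [left; apply exp_pos| apply pow_le; lra]).
      nra. }
  apply Rminus_diag_uniq. apply (geom_small ((M - 1) * 4 * D * exp (2 * M * x) / (2 * M) + 2 * D * exp (2 * M * x))).
  intros n. specialize (B n). rewrite Rmult_0_r, exp_0 in B.
  destruct (lim_bound (Datatypes.S n) x Hx) as [_ A].
  assert (C := Rabs_triang (Ps x - Pn (Datatypes.S n) x) (- (Pl x - Pn (Datatypes.S n) x))). rewrite Rabs_Ropp in C.
  replace (Ps x - Pn (Datatypes.S n) x + - (Pl x - Pn (Datatypes.S n) x)) with (Ps x - Pl x) in C by ring.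
  simpl pow in A. unfold c in B.
  assert (0 <= (/2)^n) by (apply pow_le; lra).
  assert (0 < exp (2 * M * x)) by apply exp_pos.
  assert (0 <= (M-1) * (4 * D * (/ 2) ^ n) / (2 * M)).
  { apply Rdiv_le_0_compat; [|lra]. apply Rmult_le_pos; [lra|]. apply Rmult_le_pos; lra. }
  assert (E : ((M - 1) * 4 * D * exp (2 * M * x) / (2 * M) + 2 * D * exp (2 * M * x)) * (/ 2) ^ n =
    (M - 1) * (4 * D * (/ 2) ^ n) * exp (2 * M * x) / (2 * M) + 2 * D * exp (2 * M * x) * (/ 2) ^ n) by (field; lra).
  rewrite E.
  assert (2 * D * exp (2 * M * x) * (/ 2 * (/ 2) ^ n) <= 2 * D * exp (2 * M * x) * (/ 2) ^ n).
  { apply Rmult_le_compat_l; [apply Rmult_le_pos; [lra| left; apply exp_pos]| lra]. }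
  replace ((M - 1) * (4 * D * (/ 2) ^ n) * 1 / (2 * M)) with ((M - 1) * (4 * D * (/ 2) ^ n) / (2 * M)) in B by (field; lra).
  lra.
Qed.

Lemma Ts_eq x : 0 <= x -> Ts x = Tl x.
Proof.
  intros Hx. assert (HD := D_nonneg). assert (HM := M_pos).
  set (c := fun n:nat => 2 * D * (/2)^n).
  assert (B : forall n, Rabs (Ts x - Tn (Datatypes.S n) x) <= c n * exp (2 * M * x) / (2 * M) - c n * exp (2 * M * 0) / (2 * M)).
  { intros n.
    replace (Rabs (Ts x - Tn (Datatypes.S n) x)) with (Rabs ((fun s => Ts s - Tn (Datatypes.S n) s) x - (fun s => Ts s - Tn (Datatypes.S n) s) 0)).
    2:{ cbv beta. rewrite Ts_0. destruct (pic_0 (Datatypes.S n)) as [A _]. rewrite A. f_equal. ring. }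
    apply (deriv_bound (fun s => Ts s - Tn (Datatypes.S n) s) (fun s => Ps s - Pn n s)
             (fun s => c n * exp (2 * M * s) / (2 * M)) (fun s => c n * exp (2 * M * s))); auto.
    - intros s _. apply (is_derive_minus _ _ s _ _ (Ts_deriv s) (pic_dT n s)).
    - intros s _. apply exp_deriv_c.
    - intros s Hs. rewrite Ps_eq by lra.
      destruct (lim_bound n s ltac:(lra)) as [A1 A2].
      unfold c. replace (2 * D * (/ 2) ^ n * exp (2 * M * s)) with (2 * D * exp (2 * M * s) * (/ 2) ^ n) by ring.
      exact A2. }
  apply Rminus_diag_uniq. apply (geom_small (2 * D * exp (2 * M * x) / (2 * M) + 2 * D * exp (2 * M * x))).
  intros n. specialize (B n). rewrite Rmult_0_r, exp_0 in B.
  destruct (lim_bound (Datatypes.S n) x Hx) as [A _].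
  assert (C := Rabs_triang (Ts x - Tn (Datatypes.S n) x) (- (Tl x - Tn (Datatypes.S n) x))). rewrite Rabs_Ropp in C.
  replace (Ts x - Tn (Datatypes.S n) x + - (Tl x - Tn (Datatypes.S n) x)) with (Ts x - Tl x) in C by ring.
  simpl pow in A. unfold c in B.
  assert (0 <= (/2)^n) by (apply pow_le; lra).
  assert (0 < exp (2 * M * x)) by apply exp_pos.
  assert (0 <= 2 * D * (/ 2) ^ n / (2 * M)).
  { apply Rdiv_le_0_compat; [|lra]. apply Rmult_le_pos; lra. }
  assert (E : (2 * D * exp (2 * M * x) / (2 * M) + 2 * D * exp (2 * M * x)) * (/ 2) ^ n =
    2 * D * (/ 2) ^ n * exp (2 * M * x) / (2 * M) + 2 * D * exp (2 * M * x) * (/ 2) ^ n) by (field; lra).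
  rewrite E.
  assert (2 * D * exp (2 * M * x) * (/ 2 * (/ 2) ^ n) <= 2 * D * exp (2 * M * x) * (/ 2) ^ n).
  { apply Rmult_le_compat_l; [apply Rmult_le_pos; [lra| left; apply exp_pos]| lra]. }
  replace (2 * D * (/ 2) ^ n * 1 / (2 * M)) with (2 * D * (/ 2) ^ n / (2 * M)) in B by (field; lra).
  lra.
Qed.

Lemma Ps_deriv' x : is_derive Ps x (k * Ps (Rmax x 0) - G (Ts (Rmax x 0))).
Proof.
  assert (0 <= Rmax x 0) by apply Rmax_r.
  rewrite Ps_eq, Ts_eq by auto. apply Ps_deriv.
Qed.

End Picard.

Theorem picard (G : R -> R) (L k a p0 : R) :
  0 <= L -> (forall x y, Rabs (G x - G y) <= L * Rabs (x - y)) ->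
  exists T P : R -> R,
    (forall x, is_derive T x (P x)) /\
    (forall x, is_derive P x (k * P (Rmax x 0) - G (T (Rmax x 0)))) /\
    T 0 = a /\ P 0 = p0.
Proof.
  intros HL HG. exists (Ts G k a p0), (Ps G k a p0). split; [|split; [|split]].
  - intros; apply (Ts_deriv G L); auto.
  - intros; apply (Ps_deriv' G L); auto.
  - apply Ts_0.
  - apply Ps_0.
Qed.

Definition sol (G : R -> R) (k : R) (T P : R -> R) :=
  (forall x, is_derive T x (P x)) /\ (forall x, ex_derive P x) /\
  (forall x, 0 < x -> is_derive P x (k * P x - G (T x))).

Lemma sol_contT G k T P x : sol G k T P -> continuity_pt T x.
Proof. intros [H _]. eapply deriv_contpt, H. Qed.
Lemma sol_contP G k T P x : sol G k T P -> continuity_pt P x.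
Proof. intros [_ [H _]]. destruct (H x) as [l Hl]. eapply deriv_contpt, Hl. Qed.

Lemma gron_cont G L k1 k2 T1 P1 T2 P2 B x :
  0 <= L -> (forall u v, Rabs (G u - G v) <= L * Rabs (u - v)) ->
  sol G k1 T1 P1 -> sol G k2 T2 P2 -> 0 <= x ->
  (forall s, 0 <= s <= x -> Rabs (P2 s) <= B) ->
  (T1 x - T2 x)^2 + (P1 x - P2 x)^2 <=
  ((T1 0 - T2 0)^2 + (P1 0 - P2 0)^2 + (k1 - k2)^2 * B^2) * exp ((2 + 2 * Rabs k1 + L) * x).
Proof.
  intros HL HG S1 S2 Hx HB.
  set (C := 2 + 2 * Rabs k1 + L). set (E := (k1 - k2)^2 * B^2).
  assert (HC : 1 <= C) by (unfold C; assert (0 <= Rabs k1) by apply Rabs_pos; lra).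
  assert (HE : 0 <= E) by (unfold E; apply Rmult_le_pos; apply pow2_ge_0).
  set (w := fun s => (T1 s - T2 s)^2 + (P1 s - P2 s)^2).
  set (v := fun s => (w s + E / C) * exp (- C * s)).
  assert (Hv : v x <= v 0).
  { assert (- v 0 <= - v x); [|lra].
    apply (mono_deriv (fun s => - v s) (fun s => - ((2 * (T1 s - T2 s) * (P1 s - P2 s) + 2 * (P1 s - P2 s) * ((k1 * P1 s - G (T1 s)) - (k2 * P2 s - G (T2 s)))) * exp (- C * s) + (w s + E / C) * (- C * exp (- C * s)))) 0 x Hx).
    - intros s Hs. unfold v, w.
      destruct S1 as [A1 [C1 B1]]. destruct S2 as [A2 [C2 B2]].
      assert (E1 := is_derive_unique _ _ _ (A1 s)). assert (E2 := is_derive_unique _ _ _ (A2 s)).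
      assert (E3 := is_derive_unique _ _ _ (B1 s ltac:(lra))). assert (E4 := is_derive_unique _ _ _ (B2 s ltac:(lra))).
      assert (X1 : ex_derive T1 s) by (eexists; apply A1). assert (X2 : ex_derive T2 s) by (eexists; apply A2).
      auto_derive.
      + repeat split; auto.
      + change (fun x : R => T1 x) with T1. change (fun x : R => T2 x) with T2.
        change (fun x : R => P1 x) with P1. change (fun x : R => P2 x) with P2.
        rewrite E1, E2, E3, E4. ring.
    - intros s Hs. unfold v, w. apply exd_contpt.
      destruct S1 as [A1 [C1 B1]]. destruct S2 as [A2 [C2 B2]].
      assert (X1 : ex_derive T1 s) by (eexists; apply A1). assert (X2 : ex_derive T2 s) by (eexists; apply A2).
      assert (X3 := C1 s). assert (X4 := C2 s).
      auto_derive. repeat split; auto.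
    - intros s Hs.
      assert (Hb := HB s ltac:(lra)).
      assert (Hg := HG (T1 s) (T2 s)).
      set (dT := T1 s - T2 s). set (dP := P1 s - P2 s).
      assert (Heq : k1 * P1 s - G (T1 s) - (k2 * P2 s - G (T2 s)) = k1 * dP + (k1 - k2) * P2 s - (G (T1 s) - G (T2 s))) by (unfold dP; ring).
      rewrite Heq. set (dG := G (T1 s) - G (T2 s)). fold dT in Hg. fold dG in Hg.
      assert (Hex : 0 < exp (- C * s)) by apply exp_pos.
      assert (Hw : w s = dT^2 + dP^2) by reflexivity. rewrite Hw.
      assert (K1 : 2 * dP * (k1 * dP) <= 2 * Rabs k1 * dP^2).
      { assert (k1 <= Rabs k1) by apply RRle_abs. nra. }
      assert (K2 : 2 * dP * ((k1 - k2) * P2 s) <= dP^2 + E).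
      { unfold E. assert (Rabs (P2 s) ^ 2 <= B ^ 2).
        { assert (0 <= Rabs (P2 s)) by apply Rabs_pos. nra. }
        assert (0 <= (dP - (k1 - k2) * P2 s)^2) by apply pow2_ge_0.
        assert ((P2 s)^2 <= B^2). { rewrite <- (pow2_abs (P2 s)). auto. }
        assert (0 <= (k1 - k2)^2) by apply pow2_ge_0.
        nra. }
      assert (K3 : - (2 * dP * dG) <= L * (dT^2 + dP^2)).
      { assert (Rabs dG <= L * Rabs dT) by exact Hg.
        assert (2 * Rabs dP * Rabs dT <= dT^2 + dP^2).
        { rewrite <- (pow2_abs dT), <- (pow2_abs dP). assert (0 <= (Rabs dP - Rabs dT)^2) by apply pow2_ge_0. nra. }
        assert (- (2 * dP * dG) <= 2 * Rabs dP * Rabs dG).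
        { assert (Rabs (dP * dG) = Rabs dP * Rabs dG) by apply Rabs_mult.
          assert (- (dP * dG) <= Rabs (dP * dG)) by (rewrite <- Rabs_Ropp; apply RRle_abs). lra. }
        assert (0 <= Rabs dP) by apply Rabs_pos. nra. }
      assert (K4 : 2 * dT * dP <= dT^2 + dP^2) by (assert (0 <= (dT - dP)^2) by apply pow2_ge_0; nra).
      assert (Hsum : 2 * dT * dP + 2 * dP * (k1 * dP + (k1 - k2) * P2 s - dG) <= C * (dT^2 + dP^2) + E).
      { unfold C. assert (0 <= Rabs k1) by apply Rabs_pos. assert (0 <= dT^2) by apply pow2_ge_0.
        assert (0 <= dP^2) by apply pow2_ge_0. nra. }
      replace (- ((2 * dT * dP + 2 * dP * (k1 * dP + (k1 - k2) * P2 s - dG)) * exp (- C * s) +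
        (dT ^ 2 + dP ^ 2 + E / C) * (- C * exp (- C * s)))) with
        ((C * (dT^2 + dP^2) + E - (2 * dT * dP + 2 * dP * (k1 * dP + (k1 - k2) * P2 s - dG))) * exp (- C * s)) by (field; lra).
      apply Rmult_le_pos; lra. }
  unfold v in Hv. rewrite Rmult_0_r, exp_0, Rmult_1_r in Hv. fold (w x). fold (w 0).
  assert (Hex : 0 < exp (C * x)) by apply exp_pos.
  assert (Hinv : exp (- C * x) * exp (C * x) = 1) by (rewrite <- exp_plus; replace (- C * x + C * x) with 0 by ring; apply exp_0).
  apply (Rmult_le_compat_r (exp (C * x))) in Hv; [|lra].
  rewrite Rmult_assoc, Hinv, Rmult_1_r in Hv.
  assert (0 <= E / C) by (apply Rdiv_le_0_compat; lra).
  assert (E / C <= E). { apply Rmult_le_reg_r with C; [lra|]. replace (E / C * C) with E by (field; lra). nra. }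
  assert (1 <= exp (C * x)). { rewrite <- exp_0. destruct Hx as [Hx|Hx]; [left; apply exp_increasing; nra| subst; rewrite Rmult_0_r; lra]. }
  assert (0 <= w 0) by (unfold w; assert (0 <= (T1 0 - T2 0)^2) by apply pow2_ge_0; assert (0 <= (P1 0 - P2 0)^2) by apply pow2_ge_0; lra).
  unfold E in *. nra.
Qed.

Lemma back_uniq G L k T P x1 :
  0 <= L -> (forall u v, Rabs (G u - G v) <= L * Rabs (u - v)) -> G 1 = 0 ->
  sol G k T P -> 0 < x1 -> T x1 = 1 -> P x1 = 0 -> T 0 = 1 /\ P 0 = 0.
Proof.
  intros HL HG HG1 S1 Hx1 HT HP.
  set (C := 2 + 2 * Rabs k + L).
  assert (HC : 1 <= C) by (unfold C; assert (0 <= Rabs k) by apply Rabs_pos; lra).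
  set (w := fun s => (T s - 1)^2 + (P s)^2).
  set (v := fun s => w s * exp (C * s)).
  destruct S1 as [A1 [C1 B1]].
  assert (Hv : v 0 <= v x1).
  { apply (mono_deriv v (fun s => (2 * (T s - 1) * P s + 2 * P s * (k * P s - G (T s))) * exp (C * s) + w s * (C * exp (C * s))) 0 x1); [lra| | |].
    - intros s Hs. unfold v, w.
      assert (E1 := is_derive_unique _ _ _ (A1 s)).
      assert (E3 := is_derive_unique _ _ _ (B1 s ltac:(lra))).
      assert (X1 : ex_derive T s) by (eexists; apply A1).
      assert (X3 := C1 s).
      auto_derive.
      + repeat split; auto.
      + change (fun x : R => T x) with T. change (fun x : R => P x) with P.
        rewrite E1, E3. ring.
    - intros s Hs. unfold v, w. apply exd_contpt.
      assert (X1 : ex_derive T s) by (eexists; apply A1).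
      assert (X3 := C1 s).
      auto_derive. repeat split; auto.
    - intros s Hs.
      assert (Hg := HG (T s) 1). rewrite HG1, Rminus_0_r in Hg.
      set (dT := T s - 1). set (p := P s). fold dT in Hg.
      assert (Hex : 0 < exp (C * s)) by apply exp_pos.
      assert (K1 : - (2 * Rabs k * p^2) <= 2 * p * (k * p)).
      { assert (- Rabs k <= k) by (rewrite <- Rabs_Ropp; replace k with (- - k) at 2 by ring; apply Ropp_le_contravar; apply RRle_abs). nra. }
      assert (K3 : - (L * (dT^2 + p^2)) <= - (2 * p * G (T s))).
      { assert (2 * Rabs p * Rabs dT <= dT^2 + p^2).
        { rewrite <- (pow2_abs dT), <- (pow2_abs p). assert (0 <= (Rabs p - Rabs dT)^2) by apply pow2_ge_0. nra. }
        assert (p * G (T s) <= Rabs p * Rabs (G (T s))).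
        { rewrite <- Rabs_mult. apply RRle_abs. }
        assert (0 <= Rabs p) by apply Rabs_pos. nra. }
      assert (K4 : - (dT^2 + p^2) <= 2 * dT * p) by (assert (0 <= (dT + p)^2) by apply pow2_ge_0; nra).
      assert (Hw : w s = dT^2 + p^2) by reflexivity. rewrite Hw.
      assert (0 <= 2 * dT * p + 2 * p * (k * p - G (T s)) + C * (dT^2 + p^2)).
      { unfold C. assert (0 <= dT^2) by apply pow2_ge_0. assert (0 <= p^2) by apply pow2_ge_0.
        assert (0 <= Rabs k) by apply Rabs_pos. nra. }
      replace ((2 * dT * p + 2 * p * (k * p - G (T s))) * exp (C * s) + (dT ^ 2 + p ^ 2) * (C * exp (C * s)))
        with ((2 * dT * p + 2 * p * (k * p - G (T s)) + C * (dT^2 + p^2)) * exp (C * s)) by ring.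
      apply Rmult_le_pos; lra. }
  unfold v, w in Hv. rewrite HT, HP in Hv. rewrite Rmult_0_r, exp_0, Rmult_1_r in Hv.
  replace ((1 - 1) ^ 2 + 0 ^ 2) with 0 in Hv by ring. rewrite Rmult_0_l in Hv.
  assert (0 <= (T 0 - 1)^2) by apply pow2_ge_0. assert (0 <= (P 0)^2) by apply pow2_ge_0.
  assert ((T 0 - 1)^2 = 0) by lra. assert ((P 0)^2 = 0) by lra.
  split; [apply Rminus_diag_uniq|]; nra.
Qed.

Lemma expP_dec G k T P x y : sol G k T P -> (forall t, 0 <= G t) -> 0 <= x <= y ->
  exp (- k * y) * P y <= exp (- k * x) * P x.
Proof.
  intros [A1 [C1 B1]] HG Hxy.
  assert (H : (fun s => - (exp (- k * s) * P s)) x <= (fun s => - (exp (- k * s) * P s)) y).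
  { apply (mono_deriv (fun s => - (exp (- k * s) * P s)) (fun s => exp (- k * s) * G (T s)) x y); [lra| | |].
    - intros s Hs. assert (E3 := is_derive_unique _ _ _ (B1 s ltac:(lra))).
      assert (X3 := C1 s).
      assert (Hd : is_derive (fun s => - (exp (- k * s) * P s)) s
                   (- ((- k * exp (- k * s)) * P s + exp (- k * s) * Derive P s))).
      { auto_derive; auto. change (fun x : R => P x) with P. ring. }
      rewrite E3 in Hd. replace (exp (- k * s) * G (T s)) with
        (- (- k * exp (- k * s) * P s + exp (- k * s) * (k * P s - G (T s)))) by ring. exact Hd.
    - intros s Hs. apply exd_contpt. assert (X3 := C1 s). auto_derive; auto.
    - intros s Hs. apply Rmult_le_pos; [left; apply exp_pos| apply HG]. }
  simpl in H. lra.
Qed.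

Lemma P_neg_forever G k T P x y : sol G k T P -> (forall t, 0 <= G t) -> 0 <= x <= y ->
  P x < 0 -> P y < 0.
Proof.
  intros S1 HG Hxy Hx. assert (H := expP_dec G k T P x y S1 HG Hxy).
  assert (0 < exp (- k * y)) by apply exp_pos. assert (0 < exp (- k * x)) by apply exp_pos.
  assert (exp (- k * x) * P x < 0) by nra. nra.
Qed.

Lemma P_nonpos_forever G k T P x y : sol G k T P -> (forall t, 0 <= G t) -> 0 <= x <= y ->
  P x <= 0 -> P y <= 0.
Proof.
  intros S1 HG Hxy Hx. assert (H := expP_dec G k T P x y S1 HG Hxy).
  assert (0 < exp (- k * y)) by apply exp_pos. assert (0 < exp (- k * x)) by apply exp_pos.
  assert (exp (- k * x) * P x <= 0) by nra. nra.
Qed.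

Lemma T_inc G k T P x y : sol G k T P -> x <= y -> (forall s, x < s < y -> 0 <= P s) -> T x <= T y.
Proof.
  intros [A1 _] Hxy HP. apply (mono_deriv T P x y Hxy); auto.
  intros s _. eapply deriv_contpt, A1.
Qed.

Lemma T_sinc G k T P x y : sol G k T P -> x < y -> (forall s, x < s < y -> 0 < P s) -> T x < T y.
Proof.
  intros [A1 _] Hxy HP. apply (smono_deriv T P x y Hxy); auto.
  intros s _. eapply deriv_contpt, A1.
Qed.

Lemma T_dec G k T P x y : sol G k T P -> x <= y -> (forall s, x < s < y -> P s <= 0) -> T y <= T x.
Proof.
  intros [A1 _] Hxy HP.
  assert (- T x <= - T y); [|lra].
  apply (mono_deriv (fun s => - T s) (fun s => - P s) x y Hxy).
  - intros s _. exact (is_derive_opp T s (P s) (A1 s)).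
  - intros s _. apply continuity_pt_opp. eapply deriv_contpt, A1.
  - intros s Hs. specialize (HP s Hs). lra.
Qed.

Lemma sol_limits G k T P : sol G k T P -> (forall t, t < 1 -> 0 < G t) -> (forall t, 0 <= G t) ->
  (forall t, continuity_pt G t) -> 0 <= k -> 0 <= T 0 ->
  (forall x, 0 <= x -> 0 < P x /\ T x < 1) ->
  is_lim T p_infty 1 /\ is_lim P p_infty 0.
Proof.
  intros S1 Hpos Hnn Hc Hk HT0 HPT.
  assert (Tinc : forall x y, 0 <= x <= y -> T x <= T y).
  { intros x y Hxy. apply (T_inc G k T P); [auto| lra|]. intros s Hs. left; apply HPT; lra. }
  destruct (mono_lim T 1 Tinc (fun x Hx => Rlt_le _ _ (proj2 (HPT x Hx)))) as [l [Hl1 Hl2]].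
  destruct S1 as [A1 [C1 B1]].
  set (E := fun x => P x - k * T x).
  assert (Ed : forall x, 0 < x -> is_derive E x (- G (T x))).
  { intros x Hx. unfold E.
    assert (H := is_derive_minus _ _ x _ _ (B1 x Hx) (is_derive_scal T x k (P x) (A1 x))).
    replace (- G (T x)) with (k * P x - G (T x) - k * P x) by ring. exact H. }
  assert (Econt : forall x, continuity_pt E x).
  { intros x. unfold E. apply continuity_pt_minus; [apply exd_contpt; auto|].
    apply continuity_pt_mult; [apply continuity_pt_const; intros u v; auto| eapply deriv_contpt, A1]. }
  assert (Elow : forall x, 0 <= x -> - k < E x).
  { intros x Hx. destruct (HPT x Hx). unfold E.
    assert (T 0 <= T x) by (apply Tinc; lra). destruct (HPT 0 ltac:(lra)).
    nra. }
  assert (Hl1' : l <= 1).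
  { apply Rnot_lt_le. intros Hlt. destruct (is_lim_pinf_elim T l Hl1 (l - 1) ltac:(lra)) as [M HM].
    set (x := Rmax M 0 + 1). specialize (HM x ltac:(unfold x; assert (M <= Rmax M 0) by apply Rmax_l; lra)).
    destruct (HPT x ltac:(unfold x; assert (0 <= Rmax M 0) by apply Rmax_r; lra)).
    apply Rabs_def2 in HM. lra. }
  assert (Hl : l = 1).
  { destruct Hl1' as [Hlt|]; auto. exfalso.
    assert (Ha : T 0 <= l) by (apply Hl2; lra).
    destruct (continuity_ab_min G (T 0) l Ha (fun t _ => Hc t)) as [xm [Hxm1 Hxm2]].
    assert (Hm : 0 < G xm) by (apply Hpos; lra).
    assert (Hb : forall x, 0 <= x -> G xm <= G (T x)).
    { intros x Hx. apply Hxm1. split; [apply Tinc; lra| apply Hl2; auto]. }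
    assert (Edec : forall x, 0 <= x -> E x + G xm * x <= E 0).
    { intros x Hx. assert (- (E x + G xm * x) >= - (E 0 + G xm * 0)); [|lra].
      apply Rle_ge. apply (mono_deriv (fun s => - (E s + G xm * s)) (fun s => G (T s) - G xm) 0 x Hx).
      - intros s Hs. specialize (Ed s ltac:(lra)).
        assert (H := is_derive_opp _ s _ (is_derive_plus _ _ s _ _ Ed (is_derive_scal (fun s => s) s (G xm) 1 (is_derive_id s)))).
        replace (G (T s) - G xm) with (- (- G (T s) + G xm * 1)) by ring. exact H.
      - intros s _. apply continuity_pt_opp, continuity_pt_plus; [auto|].
        apply continuity_pt_mult; [apply continuity_pt_const; intros u v; auto| apply continuity_pt_id].
      - intros s Hs. specialize (Hb s ltac:(lra)). lra. }
    set (x := (E 0 + k) / G xm + 1).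
    assert (Hx : 0 <= x). { unfold x. assert (0 <= (E 0 + k) / G xm) by (apply Rdiv_le_0_compat; [specialize (Elow 0 ltac:(lra)); lra| lra]). lra. }
    specialize (Edec x Hx). specialize (Elow x Hx).
    assert (G xm * x = E 0 + k + G xm) by (unfold x; field; lra). lra. }
  subst l. split; auto.
  destruct (mono_lim_dec E (- k)) as [e [He1 He2]].
  { intros x y Hxy. assert (- E y >= - E x); [|lra]. apply Rle_ge.
    destruct Hxy as [Hx Hxy].
    apply (mono_deriv (fun s => - E s) (fun s => G (T s)) x y Hxy).
    - intros s Hs. replace (G (T s)) with (- - G (T s)) by ring. apply (is_derive_opp E s). apply Ed; lra.
    - intros s _. apply continuity_pt_opp; auto.
    - intros s _. apply Hnn. }
  { intros x Hx. left; apply Elow; auto. }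
  set (pi := e + k).
  assert (HPl : is_lim P p_infty pi).
  { apply is_lim_pinf_intro. intros eps Heps.
    destruct (is_lim_pinf_elim E e He1 (eps/2) ltac:(lra)) as [M1 HM1].
    destruct (is_lim_pinf_elim T 1 Hl1 (eps / (2 * (k + 1))) ltac:(apply Rdiv_lt_0_compat; lra)) as [M2 HM2].
    exists (Rmax M1 M2). intros x Hx.
    assert (A1' := HM1 x ltac:(assert (M1 <= Rmax M1 M2) by apply Rmax_l; lra)).
    assert (A2' := HM2 x ltac:(assert (M2 <= Rmax M1 M2) by apply Rmax_r; lra)).
    unfold E in A1'. unfold pi.
    replace (P x - (e + k)) with ((P x - k * T x - e) + k * (T x - 1)) by ring.
    eapply Rle_lt_trans; [apply Rabs_triang|]. rewrite Rabs_mult, (Rabs_right k) by lra.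
    assert (k * Rabs (T x - 1) <= (k + 1) * (eps / (2 * (k + 1)))).
    { apply Rmult_le_compat; [lra| apply Rabs_pos| lra| lra]. }
    replace ((k + 1) * (eps / (2 * (k + 1)))) with (eps / 2) in H by (field; lra). lra. }
  assert (Hpi : pi = 0).
  { destruct (Rtotal_order pi 0) as [Hlt|[Heq|Hgt]]; auto; exfalso.
    - destruct (is_lim_pinf_elim P pi HPl (- pi) ltac:(lra)) as [M HM].
      set (x := Rmax M 0 + 1). specialize (HM x ltac:(unfold x; assert (M <= Rmax M 0) by apply Rmax_l; lra)).
      destruct (HPT x ltac:(unfold x; assert (0 <= Rmax M 0) by apply Rmax_r; lra)).
      apply Rabs_def2 in HM. lra.
    - destruct (is_lim_pinf_elim P pi HPl (pi / 2) ltac:(lra)) as [M HM].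
      set (x0 := Rmax M 0 + 1). set (x1 := x0 + 2 / pi).
      assert (Hx0 : 0 < x0) by (unfold x0; assert (0 <= Rmax M 0) by apply Rmax_r; lra).
      assert (Hx01 : x0 < x1) by (unfold x1; assert (0 < 2 / pi) by (apply Rdiv_lt_0_compat; lra); lra).
      destruct (MVT_open T P x0 x1 Hx01) as [xi [Hxi1 Hxi2]].
      + intros; apply A1.
      + intros; eapply deriv_contpt, A1.
      + assert (Hxi : M < xi) by (unfold x0 in Hxi1; assert (M <= Rmax M 0) by apply Rmax_l; lra).
        specialize (HM xi Hxi). apply Rabs_def2 in HM.
        assert (x1 - x0 = 2 / pi) by (unfold x1; ring).
        assert (P xi * (x1 - x0) > pi / 2 * (2 / pi)) by (rewrite H; apply Rmult_gt_compat_r; [apply Rdiv_lt_0_compat; lra| lra]).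
        replace (pi / 2 * (2 / pi)) with 1 in H0 by (field; lra).
        destruct (HPT x1 ltac:(lra)). destruct (HPT 0 ltac:(lra)).
        assert (T 0 <= T x0) by (apply Tinc; lra).
        lra. }
  rewrite Hpi in HPl. exact HPl.
Qed.

Definition clamp x := Rmax 0 (Rmin x 1).

Lemma clamp_in x : 0 <= clamp x <= 1.
Proof. unfold clamp, Rmax, Rmin. destruct (Rle_dec x 1); destruct Rle_dec; lra. Qed.

Lemma clamp_id x : 0 <= x <= 1 -> clamp x = x.
Proof. intros H. unfold clamp, Rmax, Rmin. destruct (Rle_dec x 1); destruct Rle_dec; lra. Qed.

Lemma clamp_lip u v : Rabs (clamp u - clamp v) <= Rabs (u - v).
Proof.
  unfold clamp, Rmax, Rmin. destruct (Rle_dec u 1); destruct (Rle_dec v 1);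
  repeat destruct Rle_dec; unfold Rabs; repeat destruct Rcase_abs; lra.
Qed.

Lemma clamp_ge1 x : 1 <= x -> clamp x = 1.
Proof. intros H. unfold clamp, Rmax, Rmin. destruct (Rle_dec x 1); destruct Rle_dec; lra. Qed.

Lemma clamp_le0 x : x <= 0 -> clamp x = 0.
Proof. intros H. unfold clamp, Rmax, Rmin. destruct (Rle_dec x 1); destruct Rle_dec; lra. Qed.

Lemma smooth_lip (g : R -> R) :
  smooth_on_open (fun _ => True) g ->
  exists L, 0 <= L /\ forall u v, 0 <= u <= 1 -> 0 <= v <= 1 -> Rabs (g u - g v) <= L * Rabs (u - v).
Proof.
  intros Hs.
  assert (H1 : forall x, ex_derive g x) by (intros x; exact (Hs 1%nat x I)).
  assert (H2 : forall x, ex_derive (Derive g) x) by (intros x; exact (Hs 2%nat x I)).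
  assert (Hc : forall x, continuity_pt (fun y => Rabs (Derive g y)) x).
  { intros x. apply (continuity_pt_comp (Derive g) Rabs). apply exd_contpt; auto. apply Rcontinuity_abs. }
  destruct (continuity_ab_maj (fun y => Rabs (Derive g y)) 0 1 ltac:(lra) (fun c _ => Hc c)) as [xm [Hm _]].
  exists (Rabs (Derive g xm)). split; [apply Rabs_pos|].
  intros u v Hu Hv.
  destruct (Req_dec u v) as [E|E]. { subst. rewrite !Rminus_diag, Rabs_R0. lra. }
  assert (Hgen : forall u v, 0 <= u <= 1 -> 0 <= v <= 1 -> u < v -> Rabs (g u - g v) <= Rabs (Derive g xm) * Rabs (u - v)).
  { intros u' v' Hu' Hv' Huv.
    destruct (MVT_open g (Derive g) u' v' Huv) as [c [Hc1 Hc2]].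
    - intros x _. apply Derive_correct; auto.
    - intros x _. apply exd_contpt; auto.
    - rewrite <- Rabs_Ropp, Ropp_minus_distr, Hc2, Rabs_mult.
      rewrite <- (Rabs_Ropp (u' - v')), Ropp_minus_distr.
      apply Rmult_le_compat_r; [apply Rabs_pos|]. apply Hm. lra. }
  destruct (Rlt_or_le u v) as [Huv|Huv].
  - apply Hgen; auto.
  - rewrite <- Rabs_Ropp, Ropp_minus_distr. rewrite <- (Rabs_Ropp (u - v)), Ropp_minus_distr.
    apply Hgen; auto. lra.
Qed.

Lemma G_lip (g : R -> R) L : 0 <= L ->
  (forall u v, 0 <= u <= 1 -> 0 <= v <= 1 -> Rabs (g u - g v) <= L * Rabs (u - v)) ->
  forall u v, Rabs (g (clamp u) - g (clamp v)) <= L * Rabs (u - v).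
Proof.
  intros HL H u v. eapply Rle_trans; [apply H; apply clamp_in|].
  apply Rmult_le_compat_l; auto. apply clamp_lip.
Qed.

Lemma inv_deriv (f df g : R -> R) lb ub t : lb < t < ub ->
  (forall x, is_derive f x (df x)) -> (forall x, lb <= x <= ub -> f (g x) = x) ->
  continuity_pt g t -> g lb <= g t <= g ub -> df (g t) <> 0 ->
  is_derive g t (1 / df (g t)).
Proof.
  intros Ht Hf Hfg Hgc Hmon Hdf.
  set (Prf := fun (z : R) (_ : g lb <= z <= g ub) => exist (fun l => derivable_pt_abs f z l) (df z) (proj1 (is_derive_Reals f z (df z)) (Hf z))).
  assert (H := derivable_pt_lim_recip_interv f g lb ub t Prf Hgc ltac:(lra) Ht Hmon).
  apply is_derive_Reals. simpl in H. apply H.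
  - intros x Hx. unfold comp, id. apply Hfg; auto.
  - exact Hdf.
Qed.

Lemma compare G k1 k2 T1 P1 T2 P2 q :
  (forall t, t < 1 -> 0 < G t) -> 0 < k1 -> k1 < k2 ->
  sol G k1 T1 P1 -> sol G k2 T2 P2 -> T1 0 < T2 0 ->
  P1 0 = k1 * (T1 0 - q) -> P2 0 = k2 * (T2 0 - q) ->
  (forall x, 0 <= x -> 0 < P1 x /\ T1 x < 1) -> (forall x, 0 <= x -> 0 < P2 x /\ T2 x < 1) ->
  is_lim T1 p_infty 1 -> is_lim P1 p_infty 0 -> is_lim T2 p_infty 1 -> is_lim P2 p_infty 0 -> False.
Proof.
  intros Gpos Hk1 Hk12 S1 S2 Ha12 P10 P20 H1 H2 LT1 LP1 LT2 LP2.
  set (a1 := T1 0). set (a2 := T2 0). fold a1 in Ha12, P10. fold a2 in Ha12, P20.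
  destruct S1 as [A1 [C1 B1]]. destruct S2 as [A2 [C2 B2]].
  assert (T1inc : forall x y, 0 <= x -> x < y -> T1 x < T1 y).
  { intros x y Hx Hxy. apply (T_sinc G k1 T1 P1 x y (conj A1 (conj C1 B1)) Hxy). intros s Hs. apply H1; lra. }
  assert (T1le : forall x y, 0 <= x -> 0 <= y -> T1 x <= T1 y -> x <= y).
  { intros x y Hx Hy Hle. apply Rnot_lt_le. intros Hlt. specialize (T1inc y x Hy Hlt). lra. }
  assert (T1c : forall x, continuity_pt T1 x) by (intros; eapply deriv_contpt, A1).
  assert (T2c : forall x, continuity_pt T2 x) by (intros; eapply deriv_contpt, A2).
  assert (T2inc : forall x y, 0 <= x -> x <= y -> T2 x <= T2 y).
  { intros x y Hx Hxy. apply (T_inc G k2 T2 P2 x y (conj A2 (conj C2 B2)) Hxy). intros s Hs. left; apply H2; lra. }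
  assert (big : forall t, t < 1 -> exists b, 0 < b /\ t < T1 b).
  { intros t Ht. destruct (is_lim_pinf_elim T1 1 LT1 (1 - t) ltac:(lra)) as [M HM].
    exists (Rmax M 0 + 1). split; [assert (0 <= Rmax M 0) by apply Rmax_r; lra|].
    specialize (HM (Rmax M 0 + 1) ltac:(assert (M <= Rmax M 0) by apply Rmax_l; lra)).
    apply Rabs_def2 in HM. lra. }
  assert (pre : forall t, a1 <= t < 1 -> exists x, 0 <= x /\ T1 x = t).
  { intros t Ht. destruct (big t ltac:(lra)) as [b [Hb Hbt]].
    destruct (IVT_gen T1 0 b t T1c) as [x [Hx1 Hx2]].
    - rewrite Rmin_left, Rmax_right by (left; apply T1inc; lra). fold a1. lra.
    - rewrite Rmin_left, Rmax_right in Hx1 by lra. exists x; split; [lra| auto]. }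
  set (X1 := fun t => epsilon (inhabits 0) (fun x => 0 <= x /\ T1 x = t)).
  assert (X1s : forall t, a1 <= t < 1 -> 0 <= X1 t /\ T1 (X1 t) = t).
  { intros t Ht. unfold X1. apply (epsilon_spec (inhabits 0) (fun x => 0 <= x /\ T1 x = t)). apply pre; auto. }
  assert (X1mono : forall t t', a1 <= t -> t <= t' -> t' < 1 -> X1 t <= X1 t').
  { intros t t' Ht Htt Ht'. destruct (X1s t ltac:(lra)) as [A B]. destruct (X1s t' ltac:(lra)) as [A' B'].
    apply T1le; auto. lra. }
  assert (X1cont : forall t, a1 < t < 1 -> continuity_pt X1 t).
  { intros t Ht. destruct (big t ltac:(lra)) as [b [Hb Hbt]].
    apply (continuity_pt_recip_interv T1 X1 0 b Hb).
    - intros x y Hx Hxy Hy. apply T1inc; lra.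
    - intros x Hx1 Hx2. unfold comp, id. apply X1s. fold a1 in Hx1.
      assert (T1 b < 1) by (apply H1; lra). lra.
    - intros x Hx1 Hx2. fold a1 in Hx1. assert (T1 b < 1) by (apply H1; lra).
      destruct (X1s x ltac:(lra)) as [A B]. split; auto.
      apply T1le; auto; lra.
    - intros; auto.
    - fold a1. lra. }
  assert (X1pos : forall t, a1 < t < 1 -> 0 < X1 t).
  { intros t Ht. destruct (X1s t ltac:(lra)) as [A B]. destruct A as [|E]; auto.
    rewrite <- E in B. fold a1 in B. lra. }
  assert (X1d : forall t, a1 < t < 1 -> is_derive X1 t (1 / P1 (X1 t))).
  { intros t Ht. set (lb := (a1 + t) / 2). set (ub := (t + 1) / 2).
    apply (inv_deriv T1 P1 X1 lb ub t).
    - unfold lb, ub; lra.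
    - auto.
    - intros x Hx. apply X1s. unfold lb, ub in Hx; lra.
    - apply X1cont; auto.
    - split; apply X1mono; unfold lb, ub; lra.
    - assert (0 < P1 (X1 t)) by (apply H1; apply X1s; lra). lra. }
  assert (T2r : forall x, 0 <= x -> a2 <= T2 x < 1).
  { intros x Hx. split; [apply T2inc; lra| apply H2; auto]. }
  set (s := fun x => X1 (T2 x)).
  assert (sd : forall x, 0 <= x -> is_derive s x (P2 x * (1 / P1 (s x)))).
  { intros x Hx. unfold s. assert (H := T2r x Hx).
    apply (is_derive_comp X1 T2 x). apply X1d; lra. apply A2. }
  assert (spos : forall x, 0 <= x -> 0 < s x) by (intros x Hx; apply X1pos; assert (H := T2r x Hx); lra).
  assert (sT : forall x, 0 <= x -> T1 (s x) = T2 x) by (intros x Hx; apply X1s; assert (H := T2r x Hx); lra).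
  set (D := fun x => P1 (s x) / k1 - P2 x / k2).
  assert (Dd : forall x, 0 <= x -> is_derive D x (Derive P1 (s x) * (P2 x * (1 / P1 (s x))) / k1 - Derive P2 x / k2)).
  { intros x Hx. unfold D.
    assert (E1 := is_derive_unique _ _ _ (sd x Hx)).
    assert (X1' : ex_derive s x) by (eexists; apply sd; auto).
    assert (X2 := C1 (s x)). assert (X3 := C2 x).
    auto_derive.
    - repeat split; auto.
    - change (fun x : R => s x) with s. rewrite E1. change (fun x : R => P1 x) with P1. change (fun x : R => P2 x) with P2. unfold Rdiv. ring. }
  assert (Dc : forall x, 0 <= x -> continuity_pt D x) by (intros x Hx; eapply deriv_contpt, Dd; auto).
  assert (Dneg : forall x, 0 < x -> D x <= 0 -> Derive P1 (s x) * (P2 x * (1 / P1 (s x))) / k1 - Derive P2 x / k2 < 0).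
  { intros x Hx HD.
    assert (Hs := spos x ltac:(lra)).
    rewrite (is_derive_unique _ _ _ (B1 (s x) Hs)), (is_derive_unique _ _ _ (B2 x Hx)).
    rewrite sT by lra.
    destruct (H2 x ltac:(lra)) as [Hp2 HT2].
    assert (Hp1 : 0 < P1 (s x)) by (apply H1; lra).
    assert (Hg : 0 < G (T2 x)) by (apply Gpos; auto).
    set (p1 := P1 (s x)) in *. set (p2 := P2 x) in *. set (gm := G (T2 x)) in *.
    unfold D in HD. fold p1 p2 in HD.
    replace ((k1 * p1 - gm) * (p2 * (1 / p1)) / k1 - (k2 * p2 - gm) / k2) with
      (gm * (p1 * k1 - p2 * k2) / (k1 * k2 * p1)) by (field; repeat split; lra).
    assert (Hc : p1 * k2 <= p2 * k1).
    { apply (Rmult_le_compat_r (k1 * k2)) in HD; [|nra].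
      replace ((p1 / k1 - p2 / k2) * (k1 * k2)) with (p1 * k2 - p2 * k1) in HD by (field; lra). lra. }
    assert (p1 * k1 - p2 * k2 < 0).
    { assert (E1 : p1 * k1 * k2 <= p2 * k1 * k1).
      { replace (p1 * k1 * k2) with (k1 * (p1 * k2)) by ring. replace (p2 * k1 * k1) with (k1 * (p2 * k1)) by ring.
        apply Rmult_le_compat_l; lra. }
      assert (E2 : k1 * k1 < k2 * k2) by nra.
      assert (E3 : p2 * (k1 * k1) < p2 * (k2 * k2)) by (apply Rmult_lt_compat_l; lra).
      assert (E4 : k2 * (p1 * k1) < k2 * (p2 * k2)) by (replace (k2 * (p1 * k1)) with (p1 * k1 * k2) by ring; replace (k2 * (p2 * k2)) with (p2 * (k2 * k2)) by ring; lra).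
      apply Rmult_lt_reg_l in E4; lra. }
    assert (0 < / (k1 * k2 * p1)) by (apply Rinv_0_lt_compat; apply Rmult_lt_0_compat; [nra| lra]).
    assert (gm * (p1 * k1 - p2 * k2) < 0) by nra. unfold Rdiv. nra. }
  assert (D0 : D 0 < 0).
  { set (s0 := s 0). assert (Hs0 : 0 < s0) by (apply spos; lra).
    assert (V : P1 s0 / k1 - T1 s0 < P1 0 / k1 - T1 0).
    { assert (- (P1 0 / k1 - T1 0) < - (P1 s0 / k1 - T1 s0)); [|lra].
      apply (smono_deriv (fun y => - (P1 y / k1 - T1 y)) (fun y => G (T1 y) / k1) 0 s0 Hs0).
      - intros y Hy. assert (E1 := is_derive_unique _ _ _ (B1 y ltac:(lra))).
        assert (E2 := is_derive_unique _ _ _ (A1 y)).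
        assert (X2 := C1 y). assert (X1' : ex_derive T1 y) by (eexists; apply A1).
        auto_derive.
        + repeat split; auto.
        + change (fun x : R => P1 x) with P1. change (fun x : R => T1 x) with T1. rewrite E1, E2. field. lra.
      - intros y _. apply continuity_pt_opp, continuity_pt_minus; [|auto].
        apply continuity_pt_mult; [apply exd_contpt; auto| apply continuity_pt_const; intros u v; auto].
      - intros y Hy. apply Rdiv_lt_0_compat; [apply Gpos; apply H1; lra| lra]. }
    unfold D. fold s0. rewrite P20. unfold s0 in *. rewrite sT in V by lra. fold a1 a2 in V. rewrite P10 in V.
    replace (k1 * (a1 - q) / k1) with (a1 - q) in V by (field; lra).
    replace (k2 * (a2 - q) / k2) with (a2 - q) by (field; lra). lra. }
  assert (Dl : exists x1, 0 < x1 /\ D 0 / 2 <= D x1).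
  { destruct (is_lim_pinf_elim P2 0 LP2 (- D 0 * k2 / 4) ltac:(nra)) as [M2 HM2].
    destruct (is_lim_pinf_elim P1 0 LP1 (- D 0 * k1 / 4) ltac:(nra)) as [M1 HM1].
    set (y1 := Rmax M1 0 + 1).
    assert (Hy1 : 0 < y1) by (unfold y1; assert (0 <= Rmax M1 0) by apply Rmax_r; lra).
    destruct (is_lim_pinf_elim T2 1 LT2 (1 - T1 y1) ltac:(assert (T1 y1 < 1) by (apply H1; lra); lra)) as [M3 HM3].
    set (x1 := Rmax (Rmax M2 M3) 0 + 1).
    assert (Hx1a : M2 < x1) by (unfold x1; assert (M2 <= Rmax M2 M3) by apply Rmax_l; assert (Rmax M2 M3 <= Rmax (Rmax M2 M3) 0) by apply Rmax_l; lra).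
    assert (Hx1b : M3 < x1) by (unfold x1; assert (M3 <= Rmax M2 M3) by apply Rmax_r; assert (Rmax M2 M3 <= Rmax (Rmax M2 M3) 0) by apply Rmax_l; lra).
    assert (Hx1c : 0 < x1) by (unfold x1; assert (0 <= Rmax (Rmax M2 M3) 0) by apply Rmax_r; lra).
    exists x1. split; auto.
    specialize (HM2 x1 Hx1a). specialize (HM3 x1 Hx1b). apply Rabs_def2 in HM3.
    assert (Hsx : y1 < s x1).
    { apply Rnot_le_lt. intros Hle.
      assert (T1 (s x1) <= T1 y1).
      { destruct Hle as [Hlt|E]; [left; apply T1inc; auto; left; apply spos; lra| rewrite E; lra]. }
      rewrite sT in H by lra. lra. }
    specialize (HM1 (s x1) ltac:(unfold y1 in Hsx; assert (M1 <= Rmax M1 0) by apply Rmax_l; lra)).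
    rewrite Rminus_0_r in HM1, HM2. apply Rabs_def2 in HM1. apply Rabs_def2 in HM2.
    change (D x1) with (P1 (s x1) / k1 - P2 x1 / k2).
    assert (0 < P1 (s x1) / k1).
    { apply Rdiv_lt_0_compat; [apply H1; left; apply spos; lra| lra]. }
    assert (P2 x1 / k2 < - D 0 / 4).
    { apply Rmult_lt_reg_r with k2; [lra|]. replace (P2 x1 / k2 * k2) with (P2 x1) by (field; lra). lra. }
    lra. }
  destruct Dl as [x1 [Hx1 Hx1D]].
  destruct (first_cross D x1 (D 0 / 2) Hx1 (fun x Hx => Dc x (proj1 Hx)) ltac:(lra) Hx1D) as [y [Hy [HDy Hlow]]].
  assert (Hy0 : 0 < y) by lra.
  assert (- D 0 < - D y).
  { apply (smono_deriv (fun x => - D x) (fun x => - (Derive P1 (s x) * (P2 x * (1 / P1 (s x))) / k1 - Derive P2 x / k2)) 0 y Hy0).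
    - intros x Hx. apply (is_derive_opp D x). apply Dd; lra.
    - intros x Hx. apply continuity_pt_opp. apply Dc; lra.
    - intros x Hx. assert (D x < D 0 / 2) by (apply Hlow; lra).
      assert (Hn := Dneg x ltac:(lra) ltac:(lra)). lra. }
  lra.
Qed.

Section Main.
Variables (eta Qg Qp : R) (Psi : R -> R) (cmax cmin : R) (thetas : R -> R) (g : R -> R) (L : R).
Hypothesis Heta : 0 < eta.
Hypothesis HQg : 0 < Qg.
Hypothesis HQp : 0 < Qp.
Hypothesis Hg_eq : forall x, 0 <= x <= 1 -> g x = Psi x.
Hypothesis HPsi_pos : forall x, 0 <= x < 1 -> 0 < Psi x.
Hypothesis HPsi_1 : Psi 1 = 0.
Hypothesis HPsi_nonneg : forall x, 0 <= x <= 1 -> 0 <= Psi x.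
Hypothesis Hcmax : cmax < 0.
Hypothesis Hts_range : forall c, cmax <= c <= 0 -> 0 <= thetas c <= 1.
Hypothesis Hts_cont : forall c, cmax <= c <= 0 ->
      filterlim thetas (within (fun y => cmax <= y <= 0) (locally c)) (locally (thetas c)).
Hypothesis Hts_decr : forall a b, cmax <= a -> a < b -> b <= 0 -> thetas b < thetas a.
Hypothesis Hts_0 : thetas 0 = 0.
Hypothesis Hts_cmax : thetas cmax = 1.
Hypothesis Hcmin : cmax < cmin < 0.
Hypothesis Hts_cmin : thetas cmin = Qp / (Qg + Qp).
Hypothesis HL : 0 <= L.
Hypothesis Hlip : forall u v, 0 <= u <= 1 -> 0 <= v <= 1 -> Rabs (g u - g v) <= L * Rabs (u - v).

Definition GG x := g (clamp x).

Lemma GG_lip u v : Rabs (GG u - GG v) <= L * Rabs (u - v).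
Proof. apply G_lip; auto. Qed.

Lemma GG_Psi x : 0 <= x <= 1 -> GG x = Psi x.
Proof. intros H. unfold GG. rewrite clamp_id; auto. Qed.

Lemma GG_nonneg x : 0 <= GG x.
Proof. unfold GG. rewrite Hg_eq by apply clamp_in. apply HPsi_nonneg, clamp_in. Qed.

Lemma GG_pos x : x < 1 -> 0 < GG x.
Proof.
  intros H. unfold GG. assert (A := clamp_in x). rewrite Hg_eq by auto. apply HPsi_pos.
  split; [lra|]. unfold clamp, Rmax, Rmin in *. destruct (Rle_dec x 1); repeat destruct Rle_dec; lra.
Qed.

Lemma GG_1 : GG 1 = 0.
Proof. rewrite GG_Psi by lra. auto. Qed.

Lemma GG_ge1 x : 1 <= x -> GG x = 0.
Proof. intros H. unfold GG. rewrite clamp_ge1 by auto. rewrite Hg_eq by lra. auto. Qed.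

Definition q := Qp / (Qp + Qg).
Lemma q_bounds : 0 < q < 1.
Proof. unfold q. split; [apply Rdiv_lt_0_compat; lra|]. apply Rmult_lt_reg_r with (Qp + Qg); [lra|].
  replace (Qp / (Qp + Qg) * (Qp + Qg)) with Qp by (field; lra). lra. Qed.
Lemma ts_cmin : thetas cmin = q.
Proof. rewrite Hts_cmin. unfold q. f_equal. ring. Qed.

Definition kk c := - eta * c.
Definition aa c := thetas c.
Definition pp c := kk c * (aa c - q).

Lemma sol_ex c : {TP : (R -> R) * (R -> R) |
  (forall x, is_derive (fst TP) x (snd TP x)) /\
  (forall x, is_derive (snd TP) x (kk c * snd TP (Rmax x 0) - GG (fst TP (Rmax x 0)))) /\
  fst TP 0 = aa c /\ snd TP 0 = pp c}.
Proof.
  apply constructive_indefinite_description.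
  destruct (picard GG L (kk c) (aa c) (pp c) HL GG_lip) as [T [P H]].
  exists (T, P). exact H.
Qed.

Definition Tc c := fst (proj1_sig (sol_ex c)).
Definition Pcc c := snd (proj1_sig (sol_ex c)).

Lemma Tc_dT c x : is_derive (Tc c) x (Pcc c x).
Proof. unfold Tc, Pcc. destruct (proj2_sig (sol_ex c)) as [H _]. apply H. Qed.
Lemma Tc_dP c x : is_derive (Pcc c) x (kk c * Pcc c (Rmax x 0) - GG (Tc c (Rmax x 0))).
Proof. unfold Tc, Pcc. destruct (proj2_sig (sol_ex c)) as [_ [H _]]. apply H. Qed.
Lemma Tc_0 c : Tc c 0 = aa c.
Proof. unfold Tc. destruct (proj2_sig (sol_ex c)) as [_ [_ [H _]]]. apply H. Qed.
Lemma Pc_0 c : Pcc c 0 = pp c.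
Proof. unfold Pcc. destruct (proj2_sig (sol_ex c)) as [_ [_ [_ H]]]. apply H. Qed.

Lemma Tc_sol c : sol GG (kk c) (Tc c) (Pcc c).
Proof.
  split; [apply Tc_dT|split].
  - intros x. eexists. apply Tc_dP.
  - intros x Hx. assert (E := Tc_dP c x). rewrite Rmax_left in E by lra. exact E.
Qed.

Lemma Tc_cont c x : continuity_pt (Tc c) x.
Proof. eapply deriv_contpt, Tc_dT. Qed.
Lemma Pc_cont c x : continuity_pt (Pcc c) x.
Proof. eapply deriv_contpt, Tc_dP. Qed.

Lemma cont_dep c X eps : cmax <= c <= cmin -> 0 <= X -> 0 < eps ->
  exists d, 0 < d /\ forall c', cmax <= c' <= cmin -> Rabs (c' - c) < d ->
    forall y, 0 <= y <= X -> Rabs (Tc c' y - Tc c y) < eps /\ Rabs (Pcc c' y - Pcc c y) < eps.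
Proof.
  intros Hc HX He.
  destruct (continuity_ab_maj (fun y => Rabs (Pcc c y)) 0 X HX) as [xm [Hxm _]].
  { intros y _. apply (continuity_pt_comp (Pcc c) Rabs); [apply Pc_cont| apply Rcontinuity_abs]. }
  set (B := Rabs (Pcc c xm)).
  set (Cb := 2 + 2 * (Rabs (kk c) + 1) + L).
  set (K := 1 + (1 + Rabs (kk c))^2 + B^2).
  assert (HK : 1 <= K) by (unfold K; assert (0 <= (1 + Rabs (kk c))^2) by apply pow2_ge_0; assert (0 <= B^2) by apply pow2_ge_0; lra).
  set (e0 := eps^2 * exp (- (Cb * X)) / (2 * K)).
  assert (He0 : 0 < e0) by (unfold e0; apply Rdiv_lt_0_compat; [apply Rmult_lt_0_compat; [nra| apply exp_pos]| lra]).
  set (r := Rmin 1 e0).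
  assert (Hr : 0 < r) by (apply Rmin_pos; lra).
  assert (Hr1 : r <= 1) by apply Rmin_l. assert (Hr2 : r <= e0) by apply Rmin_r.
  destruct (within_eps thetas _ c (Hts_cont c ltac:(lra)) r Hr) as [da [Hda Hda2]].
  exists (Rmin da (r / eta)). split; [apply Rmin_pos; [lra| apply Rdiv_lt_0_compat; lra]|].
  intros c' Hc' Hcc' y Hy.
  assert (Hc1 : Rabs (c' - c) < da) by (eapply Rlt_le_trans; [exact Hcc'| apply Rmin_l]).
  assert (Hc2 : Rabs (c' - c) < r / eta) by (eapply Rlt_le_trans; [exact Hcc'| apply Rmin_r]).
  assert (Ha : Rabs (aa c' - aa c) < r) by (apply Hda2; [lra| auto]).
  assert (Hk : Rabs (kk c' - kk c) < r).
  { unfold kk. replace (- eta * c' - - eta * c) with (- eta * (c' - c)) by ring.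
    rewrite Rabs_mult, Rabs_Ropp, Rabs_right by lra.
    apply (Rmult_lt_compat_l eta) in Hc2; [|lra]. replace (eta * (r / eta)) with r in Hc2 by (field; lra). lra. }
  assert (HB : forall s, 0 <= s <= y -> Rabs (Pcc c s) <= B) by (intros s Hs; apply Hxm; lra).
  assert (Gr := gron_cont GG L (kk c') (kk c) (Tc c') (Pcc c') (Tc c) (Pcc c) B y HL GG_lip (Tc_sol c') (Tc_sol c) ltac:(lra) HB).
  rewrite !Tc_0, !Pc_0 in Gr.
  assert (Ha' : 0 <= aa c' <= 1) by (apply Hts_range; lra).
  assert (Hq := q_bounds).
  assert (Hp : Rabs (pp c' - pp c) <= r * (1 + Rabs (kk c))).
  { unfold pp. replace (kk c' * (aa c' - q) - kk c * (aa c - q)) with ((kk c' - kk c) * (aa c' - q) + kk c * (aa c' - aa c)) by ring.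
    eapply Rle_trans; [apply Rabs_triang|]. rewrite !Rabs_mult.
    assert (Rabs (aa c' - q) <= 1) by (apply Rabs_le; lra).
    assert (0 <= Rabs (kk c' - kk c)) by apply Rabs_pos. assert (0 <= Rabs (kk c)) by apply Rabs_pos.
    assert (0 <= Rabs (aa c' - q)) by apply Rabs_pos.
    assert (Rabs (kk c' - kk c) * Rabs (aa c' - q) <= r * 1) by (apply Rmult_le_compat; lra).
    assert (Rabs (kk c) * Rabs (aa c' - aa c) <= Rabs (kk c) * r) by (apply Rmult_le_compat_l; lra).
    lra. }
  assert (W0 : (aa c' - aa c)^2 + (pp c' - pp c)^2 + (kk c' - kk c)^2 * B^2 <= r^2 * K).
  { rewrite <- (pow2_abs (aa c' - aa c)), <- (pow2_abs (pp c' - pp c)), <- (pow2_abs (kk c' - kk c)).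
    assert (0 <= Rabs (aa c' - aa c)) by apply Rabs_pos. assert (0 <= Rabs (pp c' - pp c)) by apply Rabs_pos.
    assert (0 <= Rabs (kk c' - kk c)) by apply Rabs_pos. assert (0 <= Rabs (kk c)) by apply Rabs_pos.
    assert (0 <= B^2) by apply pow2_ge_0.
    assert (Rabs (aa c' - aa c) ^ 2 <= r^2) by nra.
    assert (Rabs (pp c' - pp c) ^ 2 <= r^2 * (1 + Rabs (kk c))^2) by nra.
    assert (Rabs (kk c' - kk c) ^ 2 <= r^2) by nra.
    assert (Rabs (kk c' - kk c) ^ 2 * B^2 <= r^2 * B^2) by (apply Rmult_le_compat_r; lra).
    unfold K. nra. }
  assert (HCk : 2 + 2 * Rabs (kk c') + L <= Cb).
  { unfold Cb. assert (Rabs (kk c') <= Rabs (kk c) + 1); [|lra].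
    replace (kk c') with (kk c + (kk c' - kk c)) by ring.
    eapply Rle_trans; [apply Rabs_triang| lra]. }
  assert (Hexp : exp ((2 + 2 * Rabs (kk c') + L) * y) <= exp (Cb * X)).
  { assert (0 <= Rabs (kk c')) by apply Rabs_pos.
    destruct (Req_dec ((2 + 2 * Rabs (kk c') + L) * y) (Cb * X)) as [E|E]; [rewrite E; lra|].
    left; apply exp_increasing. assert (0 <= 2 + 2 * Rabs (kk c') + L) by lra. nra. }
  assert (Hr2K : r^2 * K * exp (Cb * X) <= eps^2 / 2).
  { assert (r^2 <= e0) by nra.
    assert (r^2 * K * exp (Cb * X) <= e0 * K * exp (Cb * X)).
    { apply Rmult_le_compat_r; [left; apply exp_pos|]. apply Rmult_le_compat_r; lra. }
    unfold e0 in H0. replace (eps ^ 2 * exp (- (Cb * X)) / (2 * K) * K * exp (Cb * X)) with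
      (eps^2 / 2 * (exp (- (Cb * X)) * exp (Cb * X))) in H0 by (field; lra).
    rewrite <- exp_plus in H0. replace (- (Cb * X) + Cb * X) with 0 in H0 by ring. rewrite exp_0 in H0. lra. }
  assert (Wf : (Tc c' y - Tc c y)^2 + (Pcc c' y - Pcc c y)^2 <= eps^2 / 2).
  { eapply Rle_trans; [exact Gr|]. eapply Rle_trans; [|exact Hr2K].
    assert (0 <= (aa c' - aa c)^2 + (pp c' - pp c)^2 + (kk c' - kk c)^2 * B^2).
    { assert (0 <= (aa c' - aa c)^2) by apply pow2_ge_0. assert (0 <= (pp c' - pp c)^2) by apply pow2_ge_0.
      assert (0 <= (kk c' - kk c)^2 * B^2) by (apply Rmult_le_pos; apply pow2_ge_0). lra. }
    assert (0 < exp ((2 + 2 * Rabs (kk c') + L) * y)) by apply exp_pos.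
    apply Rle_trans with (r^2 * K * exp ((2 + 2 * Rabs (kk c') + L) * y)).
    - apply Rmult_le_compat_r; lra.
    - apply Rmult_le_compat_l; [apply Rmult_le_pos; [apply pow2_ge_0| lra]| lra]. }
  assert (0 <= (Tc c' y - Tc c y)^2) by apply pow2_ge_0. assert (0 <= (Pcc c' y - Pcc c y)^2) by apply pow2_ge_0.
  split; apply sq_lt_abs; nra.
Qed.

Definition Uset c := exists x, 0 <= x /\ Pcc c x < 0 /\ forall y, 0 <= y <= x -> Tc c y < 1.
Definition Oset c := exists x, 0 <= x /\ 1 < Tc c x.

Lemma U_open c : cmax <= c <= cmin -> Uset c ->
  exists d, 0 < d /\ forall c', cmax <= c' <= cmin -> Rabs (c' - c) < d -> Uset c'.
Proof.
  intros Hc [x [Hx [HP HT]]].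
  destruct (continuity_ab_maj (Tc c) 0 x Hx (fun y _ => Tc_cont c y)) as [xm [Hxm Hxm2]].
  assert (HTm : Tc c xm < 1) by (apply HT; auto).
  set (eps := Rmin (- Pcc c x) (1 - Tc c xm)).
  assert (He : 0 < eps) by (apply Rmin_pos; lra).
  assert (He1 : eps <= - Pcc c x) by apply Rmin_l. assert (He2 : eps <= 1 - Tc c xm) by apply Rmin_r.
  destruct (cont_dep c x eps Hc Hx He) as [d [Hd Hd2]].
  exists d. split; auto. intros c' Hc' Hcc'. exists x. split; auto. split.
  - destruct (Hd2 c' Hc' Hcc' x ltac:(lra)) as [_ A]. apply Rabs_def2 in A. lra.
  - intros y Hy. destruct (Hd2 c' Hc' Hcc' y Hy) as [A _]. apply Rabs_def2 in A.
    assert (Tc c y <= Tc c xm) by (apply Hxm; auto). lra.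
Qed.

Lemma O_open c : cmax <= c <= cmin -> Oset c ->
  exists d, 0 < d /\ forall c', cmax <= c' <= cmin -> Rabs (c' - c) < d -> Oset c'.
Proof.
  intros Hc [x [Hx HT]].
  destruct (cont_dep c x (Tc c x - 1) Hc Hx ltac:(lra)) as [d [Hd Hd2]].
  exists d. split; auto. intros c' Hc' Hcc'. exists x. split; auto.
  destruct (Hd2 c' Hc' Hcc' x ltac:(lra)) as [A _]. apply Rabs_def2 in A. lra.
Qed.

Lemma cmin_U : Uset cmin.
Proof.
  assert (Hq := q_bounds).
  assert (Ha : aa cmin = q) by apply ts_cmin.
  assert (Hp : pp cmin = 0) by (unfold pp; rewrite Ha; ring).
  assert (D := Tc_dP cmin 0). rewrite Rmax_left in D by lra. rewrite Pc_0, Tc_0, Hp, Ha in D.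
  assert (Hg := GG_pos q ltac:(lra)).
  destruct (deriv_local_neg _ _ _ D ltac:(lra)) as [d1 [Hd1 Hd1']].
  destruct (contpt_eps _ _ (Tc_cont cmin 0) (1 - q) ltac:(lra)) as [d2 [Hd2 Hd2']].
  rewrite Tc_0, Ha in Hd2'.
  set (x := Rmin d1 d2 / 2).
  assert (Hx : 0 < x) by (unfold x; assert (0 < Rmin d1 d2) by (apply Rmin_pos; lra); lra).
  assert (Hx1 : x < d1) by (unfold x; assert (Rmin d1 d2 <= d1) by apply Rmin_l; lra).
  assert (Hx2 : x < d2) by (unfold x; assert (Rmin d1 d2 <= d2) by apply Rmin_r; lra).
  exists x. split; [lra|]. split.
  - destruct (Hd1' x ltac:(lra)) as [A _]. rewrite Rplus_0_l, Pc_0, Hp in A. exact A.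
  - intros y Hy. assert (A : Rabs (y - 0) < d2) by (apply Rabs_def1; lra).
    specialize (Hd2' y A). apply Rabs_def2 in Hd2'. lra.
Qed.

Lemma cmax_O : Oset cmax.
Proof.
  assert (Hq := q_bounds).
  assert (Ha : aa cmax = 1) by apply Hts_cmax.
  assert (Hk : 0 < kk cmax) by (unfold kk; nra).
  assert (Hp : 0 < pp cmax) by (unfold pp; rewrite Ha; nra).
  assert (D := Tc_dT cmax 0). rewrite Pc_0 in D.
  destruct (deriv_local _ _ _ D Hp) as [d [Hd Hd']].
  exists (d/2). split; [lra|]. destruct (Hd' (d/2) ltac:(lra)) as [A _].
  rewrite Tc_0, Ha, Rplus_0_l in A. exact A.
Qed.

Lemma UO_disj c : Uset c -> Oset c -> False.
Proof.
  intros [x [Hx [HP HT]]] [z [Hz HTz]].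
  destruct (Rle_dec z x) as [Hzx|Hzx].
  - specialize (HT z ltac:(lra)). lra.
  - assert (Hneg : forall s, x <= s -> Pcc c s < 0).
    { intros s Hs. apply (P_neg_forever GG (kk c) (Tc c) (Pcc c) x s (Tc_sol c) GG_nonneg); auto. }
    assert (Tc c z <= Tc c x).
    { apply (T_dec GG (kk c) (Tc c) (Pcc c) x z (Tc_sol c)); [lra|]. intros s Hs. left; apply Hneg; lra. }
    specialize (HT x ltac:(lra)). lra.
Qed.

Lemma cstar_ex : exists c, cmax <= c <= cmin /\ ~ Oset c /\ ~ Uset c.
Proof.
  apply (connect_interval Oset Uset cmax cmin); try lra.
  - apply cmax_O.
  - apply cmin_U.
  - intros c _ A B. exact (UO_disj c B A).
  - apply O_open.
  - apply U_open.
Qed.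

Lemma GG_cont x : continuity_pt GG x.
Proof. apply (G_contpt GG L HL GG_lip). Qed.

Lemma cstar_props c : cmax <= c <= cmin -> ~ Oset c -> ~ Uset c ->
  cmax < c < cmin /\ (forall x, 0 <= x -> 0 < Pcc c x /\ Tc c x < 1 /\ aa c <= Tc c x) /\
  is_lim (Tc c) p_infty 1 /\ is_lim (Pcc c) p_infty 0.
Proof.
  intros Hc HO HU.
  assert (Hq := q_bounds).
  assert (Hc1 : cmax < c). { destruct (proj1 Hc) as [|E]; auto. exfalso; apply HO. rewrite <- E. apply cmax_O. }
  assert (Hc2 : c < cmin). { destruct (proj2 Hc) as [|E]; auto. exfalso; apply HU. rewrite E. apply cmin_U. }
  assert (Ha1 : aa c < 1) by (unfold aa; rewrite <- Hts_cmax; apply Hts_decr; lra).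
  assert (Haq : q < aa c) by (unfold aa; rewrite <- ts_cmin; apply Hts_decr; lra).
  assert (Hk : 0 < kk c) by (unfold kk; nra).
  assert (Hp0 : 0 < pp c) by (unfold pp; nra).
  assert (S1 := Tc_sol c).
  assert (Ta : forall x, 0 <= x -> Tc c x <= 1).
  { intros x Hx. apply Rnot_lt_le. intros H. apply HO. exists x; split; auto. }
  assert (Tb : forall x, 0 <= x -> Tc c x < 1).
  { intros x1 Hx1. destruct (Ta x1 Hx1) as [|E]; auto. exfalso.
    assert (x1 <> 0) by (intros ->; rewrite Tc_0 in E; lra).
    assert (HP : Pcc c x1 = 0).
    { apply (fermat_max (Tc c) x1 (Pcc c x1) 0 (x1 + 1)); [lra| apply Tc_dT|].
      intros y Hy. rewrite E. apply Ta. lra. }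
    destruct (back_uniq GG L (kk c) (Tc c) (Pcc c) x1 HL GG_lip GG_1 S1 ltac:(lra) E HP) as [A _].
    rewrite Tc_0 in A. lra. }
  assert (Pa : forall x, 0 <= x -> 0 <= Pcc c x).
  { intros x Hx. apply Rnot_lt_le. intros H. apply HU. exists x. split; auto. split; auto.
    intros y Hy. apply Tb. lra. }
  assert (Pb : forall x, 0 <= x -> 0 < Pcc c x).
  { intros x1 Hx1. destruct (Pa x1 Hx1) as [|E]; auto. exfalso.
    assert (x1 <> 0) by (intros ->; rewrite Pc_0 in E; lra).
    assert (D := Tc_dP c x1). rewrite Rmax_left in D by lra.
    assert (D' := is_derive_opp _ _ _ D).
    assert (Hz := fermat_max (fun y => - Pcc c y) x1 _ 0 (x1 + 1) ltac:(lra) D').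
    assert (- (kk c * Pcc c x1 - GG (Tc c x1)) = 0).
    { apply Hz. intros y Hy. rewrite <- E. specialize (Pa y ltac:(lra)). lra. }
    rewrite <- E in H0. assert (HGp := GG_pos (Tc c x1) (Tb x1 Hx1)). lra. }
  assert (Tc0 : forall x, 0 <= x -> aa c <= Tc c x).
  { intros x Hx. rewrite <- (Tc_0 c). apply (T_inc GG (kk c) (Tc c) (Pcc c)); auto. intros s Hs. apply Pa. lra. }
  destruct (sol_limits GG (kk c) (Tc c) (Pcc c) S1 GG_pos GG_nonneg GG_cont ltac:(lra)) as [L1 L2].
  { rewrite Tc_0. apply Hts_range; lra. }
  { intros x Hx. split; [apply Pb| apply Tb]; auto. }
  split; [lra|]. split; [|split; auto].
  intros x Hx. split; [apply Pb; auto| split; [apply Tb; auto| apply Tc0; auto]].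
Qed.

Lemma exists_sol : exists c, cmax < c < cmin /\ exists theta, Pc eta Qg Qp Psi thetas c theta.
Proof.
  destruct cstar_ex as [c [Hc [HO HU]]].
  destruct (cstar_props c Hc HO HU) as [Hc' [Hxx [LT LP]]].
  exists c. split; auto.
  set (a := aa c). set (T := Tc c). set (P := Pcc c).
  assert (Ha : 0 <= a <= 1) by (apply Hts_range; lra).
  set (thl := fun x => a * exp (- c * x)).
  set (theta := fun x => thl (Rmin x 0) + T (Rmax x 0) - a).
  assert (Hthl0 : thl 0 = a) by (unfold thl; rewrite Rmult_0_r, exp_0; ring).
  assert (T0 : T 0 = a) by apply Tc_0.
  assert (Hneg : forall x, x <= 0 -> theta x = thl x).
  { intros x Hx. unfold theta. rewrite Rmin_left, Rmax_right by lra. rewrite T0. ring. }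
  assert (Hpos : forall x, 0 <= x -> theta x = T x).
  { intros x Hx. unfold theta. rewrite Rmin_right, Rmax_left by lra. rewrite Hthl0. ring. }
  assert (Dthl : forall x, Derive thl x = a * (- c) * exp (- c * x)).
  { intros x. apply is_derive_unique. unfold thl. auto_derive; auto. ring. }
  assert (DDthl : forall x, Derive (Derive thl) x = a * c^2 * exp (- c * x)).
  { intros x. rewrite (Derive_ext _ (fun x => a * (- c) * exp (- c * x))) by auto.
    apply is_derive_unique. auto_derive; auto. ring. }
  assert (DT : forall x, Derive T x = P x) by (intros; apply is_derive_unique, Tc_dT).
  set (FF := fun x => kk c * P (Rmax x 0) - GG (T (Rmax x 0))).
  assert (DDT : forall x, Derive (Derive T) x = FF x).
  { intros x. rewrite (Derive_ext _ P) by auto. apply is_derive_unique, Tc_dP. }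
  assert (FFc : forall x, continuity_pt FF x).
  { intros x. unfold FF. apply continuity_pt_minus.
    - apply continuity_pt_mult; [apply continuity_pt_const; intros u v; auto|].
      apply (continuity_pt_comp (fun y => Rmax y 0) P); [apply Rmax0_cont| apply Pc_cont].
    - apply (continuity_pt_comp (fun y => T (Rmax y 0)) GG); [|apply GG_cont].
      apply (continuity_pt_comp (fun y => Rmax y 0) T); [apply Rmax0_cont| apply Tc_cont]. }
  exists theta. split; [|split].
  - intros x. destruct (Rle_dec x 0) as [Hx0|Hx0].
    + rewrite Hneg by auto. unfold thl. split.
      * apply Rmult_le_pos; [lra| left; apply exp_pos].
      * assert (exp (- c * x) <= 1). { rewrite <- exp_0. destruct (Req_dec x 0) as [->|]; [rewrite Rmult_0_r; lra|].
          left; apply exp_increasing; nra. }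
        nra.
    + rewrite Hpos by lra. destruct (Hxx x ltac:(lra)) as [_ [A B]]. fold a in B. fold T in A, B. lra.
  - intros x. apply cont_of_pt. unfold theta. apply continuity_pt_minus; [|apply continuity_pt_const; intros u v; auto].
    apply continuity_pt_plus.
    + apply (continuity_pt_comp (fun y => Rmin y 0) thl).
      * apply (continuity_pt_ext (fun y => - Rmax (- y) 0)).
        { intros y. unfold Rmin, Rmax. destruct (Rle_dec y 0); destruct (Rle_dec (- y) 0); lra. }
        apply continuity_pt_opp. apply (continuity_pt_comp Ropp (fun y => Rmax y 0)); [apply continuity_pt_opp, continuity_pt_id| apply Rmax0_cont].
      * apply exd_contpt. unfold thl. auto_derive; auto.
    + apply (continuity_pt_comp (fun y => Rmax y 0) T); [apply Rmax0_cont| apply Tc_cont].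
  - exists thl, T. split; [|split; [|split; [|split; [|split; [|split; [|split; [|split; [|split; [|split; [|split]]]]]]]]]].
    + split; [|split].
      * intros x. unfold thl. auto_derive; auto.
      * intros x. apply (ex_derive_ext (fun x => a * (- c) * exp (- c * x))); [intros; symmetry; auto|]. auto_derive; auto.
      * intros x. apply (continuous_ext (fun x => a * c^2 * exp (- c * x))); [intros; symmetry; auto|].
        apply cont_of_pt. apply exd_contpt. auto_derive; auto.
    + split; [|split].
      * intros x. eexists; apply Tc_dT.
      * intros x. apply (ex_derive_ext P); [intros; symmetry; auto|]. eexists; apply Tc_dP.
      * intros x. apply (continuous_ext FF); [intros; symmetry; auto|]. apply cont_of_pt; auto.
    + intros x Hx0. symmetry; auto.
    + intros x Hx0. symmetry; auto.
    + intros x Hx0. rewrite DDthl, Dthl. ring.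
    + intros x Hx0. rewrite DDT, DT. unfold FF. rewrite Rmax_left by lra. rewrite Hpos by lra.
      rewrite <- GG_Psi. { unfold kk. ring. }
      destruct (Hxx x ltac:(lra)) as [_ [A B]]. fold a T in A, B. lra.
    + apply (is_lim_ext_loc (fun x => a * exp (- c * x))).
      { exists 0. intros x Hx0. rewrite Hneg by lra. reflexivity. }
      apply lim_exp_minf; lra.
    + unfold theta. rewrite Rmin_right, Rmax_right by lra. rewrite Hthl0. fold T. rewrite T0. unfold a, aa. ring.
    + apply (is_lim_ext_loc T).
      { exists 0. intros x Hx0. rewrite Hpos by lra. reflexivity. }
      exact LT.
    + apply (is_lim_ext_loc (fun x => (a * - c) * exp (- c * x))).
      { exists 0. intros x Hx0. rewrite Dthl. reflexivity. }
      apply lim_exp_minf; nra.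
    + apply (is_lim_ext_loc P).
      { exists 0. intros x Hx0. rewrite DT. reflexivity. }
      exact LP.
    + rewrite DT, Dthl. unfold P. rewrite Pc_0. unfold pp, kk, S, q. fold a. rewrite Rmult_0_r, exp_0. ring.
Qed.


Lemma Pc_left c theta thl : cmax <= c <= 0 ->
  (forall x, 0 <= theta x <= 1) -> C2 thl -> (forall x, x <= 0 -> thl x = theta x) ->
  (forall x, x < 0 -> Derive (Derive thl) x + c * Derive thl x = 0) ->
  is_lim theta m_infty 0 -> is_lim (Derive thl) m_infty 0 ->
  Derive thl 0 = - c * theta 0.
Proof.
  intros Hc Hr [C1 [C2' C3]] Hl ODE Lm Ldl.
  set (dl := Derive thl).
  assert (Hdl : forall x, is_derive thl x (dl x)) by (intros; apply Derive_correct; auto).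
  assert (Hddl : forall x, is_derive dl x (Derive dl x)) by (intros; apply Derive_correct; auto).
  assert (L1 : forall x, x <= 0 -> dl x = dl 0 * exp (- c * x)).
  { intros x Hx.
    assert (E : (fun s => exp (c * s) * dl s) x = (fun s => exp (c * s) * dl s) 0).
    { apply (const_deriv (fun s => exp (c * s) * dl s) x 0); auto.
      - intros s Hs. assert (H := ODE s ltac:(lra)).
        assert (D : is_derive (fun s => exp (c * s) * dl s) s (c * exp (c * s) * dl s + exp (c * s) * Derive dl s)).
        { apply (is_derive_mult (fun s => exp (c * s)) dl s (c * exp (c * s)) (Derive dl s)).
          - auto_derive; auto. ring.
          - auto.
          - intros; simpl. apply Rmult_comm. }
        replace 0 with (c * exp (c * s) * dl s + exp (c * s) * Derive dl s); [exact D|].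
        fold dl in H. replace (Derive dl s) with (- c * dl s) by lra. ring.
      - intros s _. apply continuity_pt_mult.
        + apply exd_contpt. auto_derive; auto.
        + eapply deriv_contpt; apply Hddl. }
    simpl in E. rewrite Rmult_0_r, exp_0, Rmult_1_l in E.
    rewrite <- E. rewrite Rmult_comm, <- Rmult_assoc, <- exp_plus.
    replace (- c * x + c * x) with 0 by ring. rewrite exp_0. ring. }
  destruct (Req_dec c 0) as [Hc0|Hc0].
  - subst c. replace (- 0 * theta 0) with 0 by ring.
    apply small_zero. intros eps He.
    destruct (is_lim_minf_elim dl 0 Ldl eps He) as [M HM].
    specialize (HM (Rmin M 0 - 1) ltac:(assert (Rmin M 0 <= M) by apply Rmin_l; lra)).
    rewrite L1 in HM by (assert (Rmin M 0 <= 0) by apply Rmin_r; lra).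
    replace (- 0 * (Rmin M 0 - 1)) with 0 in HM by ring. rewrite exp_0, Rmult_1_r, Rminus_0_r in HM. exact HM.
  - assert (Hcn : c < 0) by lra.
    set (j := fun x => thl x + dl 0 * exp (- c * x) / c).
    assert (L2 : forall x, x <= 0 -> j x = j 0).
    { intros x Hx. apply (const_deriv j x 0); auto.
      - intros s Hs.
        assert (D : is_derive j s (dl s + dl 0 * (- c * exp (- c * s)) / c)).
        { unfold j. apply (is_derive_plus thl (fun x => dl 0 * exp (- c * x) / c)); [auto|].
          auto_derive; auto. field; auto. }
        replace 0 with (dl s + dl 0 * (- c * exp (- c * s)) / c); [exact D|].
        rewrite (L1 s) by lra. field; auto.
      - intros s _. unfold j. apply continuity_pt_plus; [eapply deriv_contpt; apply Hdl|].
        apply exd_contpt. auto_derive; auto. }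
    assert (J0 : j 0 = 0).
    { apply small_zero. intros eps He.
      destruct (is_lim_minf_elim theta 0 Lm (eps/2) ltac:(lra)) as [M1 HM1].
      destruct (is_lim_minf_elim _ 0 (lim_exp_minf (Rabs (dl 0 / c)) c Hcn (Rabs_pos _)) (eps/2) ltac:(lra)) as [M2 HM2].
      set (x := Rmin (Rmin M1 M2) 0 - 1).
      assert (x < M1) by (unfold x; assert (Rmin (Rmin M1 M2) 0 <= Rmin M1 M2) by apply Rmin_l; assert (Rmin M1 M2 <= M1) by apply Rmin_l; lra).
      assert (x < M2) by (unfold x; assert (Rmin (Rmin M1 M2) 0 <= Rmin M1 M2) by apply Rmin_l; assert (Rmin M1 M2 <= M2) by apply Rmin_r; lra).
      assert (x < 0) by (unfold x; assert (Rmin (Rmin M1 M2) 0 <= 0) by apply Rmin_r; lra).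
      specialize (HM1 x H). specialize (HM2 x H0).
      rewrite <- (L2 x) by lra. unfold j. rewrite Hl by lra.
      rewrite Rminus_0_r in HM1, HM2.
      replace (dl 0 * exp (- c * x) / c) with (dl 0 / c * exp (- c * x)) by (field; auto).
      eapply Rle_lt_trans; [apply Rabs_triang|].
      rewrite (Rabs_mult (dl 0 / c)), (Rabs_right (exp _)) by (left; apply exp_pos).
      rewrite Rabs_mult, (Rabs_right (exp _)) in HM2 by (left; apply exp_pos).
      rewrite Rabs_Rabsolu in HM2. lra. }
    unfold j in J0. rewrite Hl in J0 by lra. rewrite Rmult_0_r, exp_0 in J0.
    replace (dl 0) with (c * (dl 0 * 1 / c)) by (field; auto).
    replace (dl 0 * 1 / c) with (- theta 0) by lra. ring.
Qed.

Lemma sol_facts c theta : cmax <= c <= 0 -> Pc eta Qg Qp Psi thetas c theta ->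
  cmax < c < cmin /\ exists T P, sol GG (kk c) T P /\ T 0 = aa c /\ P 0 = pp c /\
    (forall x, 0 <= x -> 0 < P x /\ T x < 1) /\ is_lim T p_infty 1 /\ is_lim P p_infty 0.
Proof.
  intros Hc [Hr [Hcont [thl [thr [C2l [C2r [Hl [Hrr [ODEl [ODEr [Lm [H0 [Lp [Ldl [Ldr Hint]]]]]]]]]]]]]]].
  assert (Hq := q_bounds).
  set (T := thr). set (P := Derive thr).
  destruct C2r as [R1 [R2 R3]].
  assert (HTd : forall x, is_derive T x (P x)) by (intros; apply Derive_correct; auto).
  assert (HPd : forall x, is_derive P x (Derive P x)) by (intros; apply Derive_correct; auto).
  assert (S1 : sol GG (kk c) T P).
  { split; [auto| split; [auto|]]. intros x Hx.
    assert (E := ODEr x Hx). fold P in E.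
    replace (kk c * P x - GG (T x)) with (Derive P x); [auto|].
    unfold T. rewrite Hrr by lra. rewrite GG_Psi by auto. unfold kk. lra. }
  assert (T0 : T 0 = aa c) by (unfold T; rewrite Hrr by lra; auto).
  assert (Dl0 := Pc_left c theta thl Hc Hr C2l Hl ODEl Lm Ldl).
  assert (P0 : P 0 = pp c).
  { unfold P. rewrite H0 in Dl0. unfold S in Hint. unfold pp, kk, aa, q. rewrite Dl0 in Hint. lra. }
  assert (LT : is_lim T p_infty 1).
  { apply (is_lim_ext_loc theta); auto. exists 0. intros x Hx. unfold T. rewrite Hrr; auto. lra. }
  assert (Tle1 : forall x, 0 <= x -> T x <= 1) by (intros x Hx; unfold T; rewrite Hrr by auto; apply Hr).
  set (a := aa c).
  assert (Ha : 0 <= a <= 1) by (apply Hts_range; auto).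
  assert (Hk : 0 <= kk c) by (unfold kk; nra).
  assert (Hc1 : cmax < c).
  { destruct (proj1 Hc) as [|E]; auto. exfalso.
    assert (Ha1 : a = 1) by (unfold a, aa; rewrite <- E; auto).
    assert (Hk' : 0 < kk c) by (unfold kk; rewrite <- E; nra).
    assert (Hp : 0 < P 0) by (rewrite P0; unfold pp; fold a; rewrite Ha1; nra).
    destruct (deriv_local T 0 (P 0) (HTd 0) Hp) as [d [Hd Hd']].
    destruct (Hd' (d/2) ltac:(lra)) as [A _]. rewrite Rplus_0_l, T0 in A. fold a in A.
    specialize (Tle1 (d/2) ltac:(lra)). lra. }
  assert (Hc2 : c < cmin).
  { apply Rnot_le_lt. intros Hge. 
    assert (Haq : a <= q).
    { unfold a, aa. rewrite <- ts_cmin. destruct Hge as [Hlt|E]; [left; apply Hts_decr; lra| rewrite E; lra]. }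
    assert (Hp : P 0 <= 0) by (rewrite P0; unfold pp; fold a; nra).
    assert (Tb : forall y, 0 <= y -> T y <= q).
    { intros y Hy. apply Rle_trans with (T 0); [|rewrite T0; auto].
      apply (T_dec GG (kk c) T P 0 y S1 Hy). intros s Hs.
      apply (P_nonpos_forever GG (kk c) T P 0 s S1 GG_nonneg); auto; lra. }
    destruct (is_lim_pinf_elim T 1 LT ((1 - q)/2) ltac:(lra)) as [M HM].
    set (x := Rmax M 0 + 1).
    specialize (HM x ltac:(unfold x; assert (M <= Rmax M 0) by apply Rmax_l; lra)).
    specialize (Tb x ltac:(unfold x; assert (0 <= Rmax M 0) by apply Rmax_r; lra)).
    apply Rabs_def2 in HM. lra. }
  split; [lra|].
  assert (Ha1 : a < 1) by (unfold a, aa; rewrite <- Hts_cmax; apply Hts_decr; lra).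
  assert (Haq : q < a) by (unfold a, aa; rewrite <- ts_cmin; apply Hts_decr; lra).
  assert (Hk' : 0 < kk c) by (unfold kk; nra).
  assert (Hp0 : 0 < P 0) by (rewrite P0; unfold pp; fold a; nra).
  assert (Ppos : forall x, 0 <= x -> 0 < P x).
  { intros x0 Hx0. apply Rnot_le_lt. intros Hle.
    assert (Hx0' : 0 < x0) by (destruct Hx0 as [|E]; auto; subst; lra).
    assert (Tb : forall y, x0 <= y -> T y <= T x0).
    { intros y Hy. apply (T_dec GG (kk c) T P x0 y S1 Hy). intros s Hs.
      apply (P_nonpos_forever GG (kk c) T P x0 s S1 GG_nonneg); auto; lra. }
    assert (HT1 : T x0 = 1).
    { apply Rle_antisym; [apply Tle1; lra|]. apply Rnot_lt_le. intros Hlt.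
      destruct (is_lim_pinf_elim T 1 LT (1 - T x0) ltac:(lra)) as [M HM].
      set (x := Rmax M x0 + 1).
      specialize (HM x ltac:(unfold x; assert (M <= Rmax M x0) by apply Rmax_l; lra)).
      specialize (Tb x ltac:(unfold x; assert (x0 <= Rmax M x0) by apply Rmax_r; lra)).
      apply Rabs_def2 in HM. lra. }
    assert (HP : P x0 = 0).
    { apply (fermat_max T x0 (P x0) 0 (x0 + 1)); [lra| auto|].
      intros y Hy. rewrite HT1. apply Tle1. lra. }
    destruct (back_uniq GG L (kk c) T P x0 HL GG_lip GG_1 S1 Hx0' HT1 HP) as [A _].
    rewrite T0 in A. fold a in A. lra. }
  exists T, P. split; [auto| split; [auto| split; [auto| split; [|split; auto]]]].
  intros x Hx. split; [apply Ppos; auto|].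
  assert (T x < T (x + 1)).
  { apply (T_sinc GG (kk c) T P x (x+1) S1); [lra|]. intros s Hs. apply Ppos; lra. }
  specialize (Tle1 (x+1) ltac:(lra)). lra.
Qed.

Lemma compare2 c1 c2 th1 th2 : cmax <= c2 <= 0 -> cmax <= c1 <= 0 -> c2 < c1 ->
  Pc eta Qg Qp Psi thetas c1 th1 -> Pc eta Qg Qp Psi thetas c2 th2 -> False.
Proof.
  intros Hc2 Hc1 Hlt P1' P2'.
  destruct (sol_facts c1 th1 Hc1 P1') as [Hc1' [T1 [P1 [S1 [T10 [P10 [H1 [LT1 LP1]]]]]]]].
  destruct (sol_facts c2 th2 Hc2 P2') as [Hc2' [T2 [P2 [S2 [T20 [P20 [H2 [LT2 LP2]]]]]]]].
  apply (compare GG (kk c1) (kk c2) T1 P1 T2 P2 q GG_pos); auto.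
  - unfold kk; nra.
  - unfold kk; nra.
  - rewrite T10, T20. unfold aa. apply Hts_decr; lra.
  - rewrite P10, T10. reflexivity.
  - rewrite P20, T20. reflexivity.
Qed.

Lemma main_sec : exists c,
    (cmax <= c <= 0 /\ exists theta, Pc eta Qg Qp Psi thetas c theta) /\
    (forall c', cmax <= c' <= 0 ->
       (exists theta, Pc eta Qg Qp Psi thetas c' theta) -> c' = c) /\
    cmax < c < cmin.
Proof.
  destruct exists_sol as [c [Hc [th Hth]]].
  exists c. split; [split; [lra| exists th; auto]|]. split; auto.
  intros c' Hc' [th' Hth'].
  destruct (Rtotal_order c' c) as [Hlt|[Heq|Hgt]]; auto; exfalso.
  - apply (compare2 c c' th th'); auto; lra.
  - apply (compare2 c' c th' th); auto; lra.
Qed.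

End Main.


Theorem proposition8
  (eta Qg Qp : R) (Psi : R -> R) (cmax cmin : R) (thetas : R -> R)
  (Heta : 0 < eta) (HQg : 0 < Qg) (HQp : 0 < Qp)
  (* Psi : [0,1] -> [0,oo), C^oo on [0,1], > 0 on [0,1), Psi(1) = 0 *)
  (HPsi_smooth : exists g : R -> R,
      smooth_on_open (fun _ => True) g /\
      (forall x, 0 <= x <= 1 -> g x = Psi x))
  (HPsi_nonneg : forall x, 0 <= x <= 1 -> 0 <= Psi x)
  (HPsi_pos : forall x, 0 <= x < 1 -> 0 < Psi x)
  (HPsi_1 : Psi 1 = 0)
  (* theta_s : [cmax,0] -> [0,1] *)
  (Hcmax : cmax < 0)
  (Hts_range : forall c, cmax <= c <= 0 -> 0 <= thetas c <= 1)
  (Hts_cont : forall c, cmax <= c <= 0 ->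
      filterlim thetas (within (fun y => cmax <= y <= 0) (locally c))
                (locally (thetas c)))
  (Hts_decr : forall a b, cmax <= a -> a < b -> b <= 0 -> thetas b < thetas a)
  (Hts_0 : thetas 0 = 0)
  (Hts_cmax : thetas cmax = 1)
  (Hts_smooth : exists g : R -> R,
      smooth_on_open (fun x => x < 0) g /\
      (forall c, cmax <= c < 0 -> g c = thetas c) /\
      (forall c, cmax <= c < 0 -> Derive g c < 0))
  (* c_min *)
  (Hcmin : cmax < cmin < 0)
  (Hts_cmin : thetas cmin = Qp / (Qg + Qp)) :
  exists c,
    (cmax <= c <= 0 /\ exists theta, Pc eta Qg Qp Psi thetas c theta) /\
    (forall c', cmax <= c' <= 0 ->
       (exists theta, Pc eta Qg Qp Psi thetas c' theta) -> c' = c) /\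
    cmax < c < cmin.
Proof.
  destruct HPsi_smooth as [g [Hgs Hgeq]].
  destruct (smooth_lip g Hgs) as [L [HL Hlip]].
  eapply (main_sec eta Qg Qp Psi cmax cmin thetas g L); eauto.
Qed.
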